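(* Let $f=(f_1,f_2):\mathbb{R}^2\times\mathbb{R}^2\to\mathbb{R}^2$ be continuously differentiable with variables $(x,y_1,y_2)$, $x\in\mathbb{R}^2$, and let $(a,b)$, $b=(b_1,b_2)$, satisfy $f(a,b)=(0,0)$ and $\det J_{f,y}(a,b)\ne0$, where $J_{f,y}=(\partial_{y_j}f_i)_{i,j}$. Then there exist a closed rectangle $R\subset\mathbb{R}^2$ containing $a$, closed intervals $V_1\ni b_1$, $V_2\ni b_2$ (put $V=V_1\times V_2$), indices $j\ne j'$ in $\{1,2\}$, and functions $p:R\times V_{j'}\to V_j$ and $q:R\to V_{j'}$ such that for all $x\in R$, $f(x,y)=(0,0)$ where $y_{j'}=q(x)$ and $y_j=p(x,q(x))$; moreover $p$ and $q$ are the limits, in the $\Gamma$-Cesàro sense, of their dyadic block-moment polynomial approximants $p_n=P_n(p)$ and $q_m=P_m(q)$ as $n,m\to\infty$.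
   Context: Rectangles/boxes are parallel to coordinate axes. For a closed box $Q=\prod_{k=1}^d[l_k,l_k+s_k]\subset\mathbb{R}^d$ and $n\ge0$, $\Gamma_n$ is the dyadic partition of $Q$ into the $2^{nd}$ boxes $\prod_k[l_k+(i_k-1)s_k2^{-n},\,l_k+i_ks_k2^{-n}]$, $1\le i_k\le 2^n$. For a continuous $h:Q\to\mathbb{R}$ and a base point $c\in Q$, $P_n(h)$ denotes the unique polynomial of degree at most $2^n-1$ in each variable $(z_k-c_k)$ such that $\int_B P_n(h)=\int_B h$ for every $B\in\Gamma_n$ (uniqueness follows from the invertibility of the matrices $\big(\int_{I_i}(t-c_k)^{j-1}dt\big)_{i,j}$ over the dyadic subintervals $I_i$). A sequence of integrable functions $h_n$ converges to $h$ in the $\Gamma$-Cesàro sense if for every $z\in Q$ and $\epsilon>0$ there is $N$ such that for all $n\ge N$ and every $B\in\Gamma_n$ containing $z$, $\left|\frac{1}{|B|}\int_B h_n-h(z)\right|<\epsilon$. Here $p$ is considered on the box $R\times V_{j'}\subset\mathbb{R}^3$ with base point $(a,b_{j'})$ and $q$ on $R$ with base point $a$. *)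

(* Defs.v *)
From Stdlib Require Import Reals.
From Coquelicot Require Import Coquelicot.
Open Scope R_scope.

Definition dx1 (g : R*R -> R*R -> R) (x y : R*R) : R :=
  Derive (fun t => g (t, snd x) y) (fst x).
Definition dx2 (g : R*R -> R*R -> R) (x y : R*R) : R :=
  Derive (fun t => g (fst x, t) y) (snd x).
Definition dy1 (g : R*R -> R*R -> R) (x y : R*R) : R :=
  Derive (fun t => g x (t, snd y)) (fst y).
Definition dy2 (g : R*R -> R*R -> R) (x y : R*R) : R :=
  Derive (fun t => g x (fst y, t)) (snd y).

Definition C1_comp (g : R*R -> R*R -> R) : Prop :=
  (forall x y : R*R,
     ex_derive (fun t => g (t, snd x) y) (fst x) /\
     ex_derive (fun t => g (fst x, t) y) (snd x) /\
     ex_derive (fun t => g x (t, snd y)) (fst y) /\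
     ex_derive (fun t => g x (fst y, t)) (snd y)) /\
  (forall w : (R*R)*(R*R),
     continuous (fun z : (R*R)*(R*R) => dx1 g (fst z) (snd z)) w /\
     continuous (fun z : (R*R)*(R*R) => dx2 g (fst z) (snd z)) w /\
     continuous (fun z : (R*R)*(R*R) => dy1 g (fst z) (snd z)) w /\
     continuous (fun z : (R*R)*(R*R) => dy2 g (fst z) (snd z)) w).

Definition f1 (f : R*R -> R*R -> R*R) : R*R -> R*R -> R := fun x y => fst (f x y).
Definition f2 (f : R*R -> R*R -> R*R) : R*R -> R*R -> R := fun x y => snd (f x y).

Definition cont_diff (f : R*R -> R*R -> R*R) : Prop := C1_comp (f1 f) /\ C1_comp (f2 f).

Definition jac_y_det (f : R*R -> R*R -> R*R) (x y : R*R) : R :=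
  dy1 (f1 f) x y * dy2 (f2 f) x y - dy2 (f1 f) x y * dy1 (f2 f) x y.

Definition in_cint (l s t : R) : Prop := l <= t <= l + s.

(* dyadic subinterval number i (0-based, i < 2^n) of [l, l+s]:
   [l + i s 2^-n, l + (i+1) s 2^-n] *)
Definition dlo (l s : R) (n i : nat) : R := l + INR i * s / 2 ^ n.
Definition dhi (l s : R) (n i : nat) : R := l + INR (S i) * s / 2 ^ n.

(* Integral over a 2-dim box [a1,b1]x[a2,b2] and a 3-dim box
   [a1,b1]x[a2,b2]x[a3,b3] (iterated Riemann integrals; all integrands below
   are continuous on the boxes). *)
Definition int2 (h : R*R -> R) (a1 b1 a2 b2 : R) : R :=
  RInt (fun u => RInt (fun v => h (u, v)) a2 b2) a1 b1.
Definition int3 (h : R*R -> R -> R) (a1 b1 a2 b2 a3 b3 : R) : R :=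
  RInt (fun u => RInt (fun v => RInt (fun w => h (u, v) w) a3 b3) a2 b2) a1 b1.

Definition poly2 (n : nat) (c : R*R) (P : R*R -> R) : Prop :=
  exists coef : nat -> nat -> R, forall z : R*R,
    P z = sum_f_R0 (fun i1 => sum_f_R0 (fun i2 =>
            coef i1 i2 * (fst z - fst c) ^ i1 * (snd z - snd c) ^ i2)
          (2 ^ n - 1)%nat) (2 ^ n - 1)%nat.

Definition poly3 (n : nat) (c : R*R) (c3 : R) (P : R*R -> R -> R) : Prop :=
  exists coef : nat -> nat -> nat -> R, forall (z : R*R) (z3 : R),
    P z z3 = sum_f_R0 (fun i1 => sum_f_R0 (fun i2 => sum_f_R0 (fun i3 =>
            coef i1 i2 i3 * (fst z - fst c) ^ i1 * (snd z - snd c) ^ i2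
              * (z3 - c3) ^ i3)
          (2 ^ n - 1)%nat) (2 ^ n - 1)%nat) (2 ^ n - 1)%nat.

Definition is_Pn2 (l s c : R*R) (n : nat) (h P : R*R -> R) : Prop :=
  poly2 n c P /\
  forall i1 i2 : nat, (i1 < 2 ^ n)%nat -> (i2 < 2 ^ n)%nat ->
    int2 P (dlo (fst l) (fst s) n i1) (dhi (fst l) (fst s) n i1)
           (dlo (snd l) (snd s) n i2) (dhi (snd l) (snd s) n i2)
    = int2 h (dlo (fst l) (fst s) n i1) (dhi (fst l) (fst s) n i1)
             (dlo (snd l) (snd s) n i2) (dhi (snd l) (snd s) n i2).

Definition is_Pn3 (l s : R*R) (l3 s3 : R) (c : R*R) (c3 : R) (n : nat)
  (h P : R*R -> R -> R) : Prop :=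
  poly3 n c c3 P /\
  forall i1 i2 i3 : nat, (i1 < 2 ^ n)%nat -> (i2 < 2 ^ n)%nat -> (i3 < 2 ^ n)%nat ->
    int3 P (dlo (fst l) (fst s) n i1) (dhi (fst l) (fst s) n i1)
           (dlo (snd l) (snd s) n i2) (dhi (snd l) (snd s) n i2)
           (dlo l3 s3 n i3) (dhi l3 s3 n i3)
    = int3 h (dlo (fst l) (fst s) n i1) (dhi (fst l) (fst s) n i1)
             (dlo (snd l) (snd s) n i2) (dhi (snd l) (snd s) n i2)
             (dlo l3 s3 n i3) (dhi l3 s3 n i3).

Definition gamma_cesaro2 (l s : R*R) (hs : nat -> R*R -> R) (h : R*R -> R) : Prop :=
  forall z : R*R, in_cint (fst l) (fst s) (fst z) -> in_cint (snd l) (snd s) (snd z) ->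
  forall eps : R, 0 < eps -> exists N : nat, forall n : nat, (N <= n)%nat ->
  forall i1 i2 : nat, (i1 < 2 ^ n)%nat -> (i2 < 2 ^ n)%nat ->
    dlo (fst l) (fst s) n i1 <= fst z <= dhi (fst l) (fst s) n i1 ->
    dlo (snd l) (snd s) n i2 <= snd z <= dhi (snd l) (snd s) n i2 ->
    Rabs (/ (fst s / 2 ^ n * (snd s / 2 ^ n)) *
            int2 (hs n) (dlo (fst l) (fst s) n i1) (dhi (fst l) (fst s) n i1)
                        (dlo (snd l) (snd s) n i2) (dhi (snd l) (snd s) n i2)
          - h z) < eps.

Definition gamma_cesaro3 (l s : R*R) (l3 s3 : R) (hs : nat -> R*R -> R -> R)
  (h : R*R -> R -> R) : Prop :=
  forall (z : R*R) (z3 : R), in_cint (fst l) (fst s) (fst z) ->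
    in_cint (snd l) (snd s) (snd z) -> in_cint l3 s3 z3 ->
  forall eps : R, 0 < eps -> exists N : nat, forall n : nat, (N <= n)%nat ->
  forall i1 i2 i3 : nat, (i1 < 2 ^ n)%nat -> (i2 < 2 ^ n)%nat -> (i3 < 2 ^ n)%nat ->
    dlo (fst l) (fst s) n i1 <= fst z <= dhi (fst l) (fst s) n i1 ->
    dlo (snd l) (snd s) n i2 <= snd z <= dhi (snd l) (snd s) n i2 ->
    dlo l3 s3 n i3 <= z3 <= dhi l3 s3 n i3 ->
    Rabs (/ (fst s / 2 ^ n * (snd s / 2 ^ n) * (s3 / 2 ^ n)) *
            int3 (hs n) (dlo (fst l) (fst s) n i1) (dhi (fst l) (fst s) n i1)
                        (dlo (snd l) (snd s) n i2) (dhi (snd l) (snd s) n i2)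
                        (dlo l3 s3 n i3) (dhi l3 s3 n i3)
          - h z z3) < eps.

(* h is the Gamma-Cesaro limit of its approximants P_n(h): every P_n(h) exists
   (it is unique, by the context) and the sequence converges. *)
Definition Pn_limit2 (l s c : R*R) (h : R*R -> R) : Prop :=
  (forall n, exists P, is_Pn2 l s c n h P) /\
  (forall hs : nat -> R*R -> R, (forall n, is_Pn2 l s c n h (hs n)) ->
     gamma_cesaro2 l s hs h).

Definition Pn_limit3 (l s : R*R) (l3 s3 : R) (c : R*R) (c3 : R)
  (h : R*R -> R -> R) : Prop :=
  (forall n, exists P, is_Pn3 l s l3 s3 c c3 n h P) /\
  (forall hs : nat -> R*R -> R -> R, (forall n, is_Pn3 l s l3 s3 c c3 n h (hs n)) ->
     gamma_cesaro3 l s l3 s3 hs h).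

Definition in_box2 (l s z : R*R) : Prop :=
  in_cint (fst l) (fst s) (fst z) /\ in_cint (snd l) (snd s) (snd z).

Definition cont_on_box2 (l s : R*R) (h : R*R -> R) : Prop :=
  forall z, in_box2 l s z ->
    filterlim h (within (in_box2 l s) (locally z)) (locally (h z)).

Definition cont_on_box3 (l s : R*R) (l3 s3 : R) (h : R*R -> R -> R) : Prop :=
  forall z z3, in_box2 l s z -> in_cint l3 s3 z3 ->
    filterlim (fun w : (R*R)*R => h (fst w) (snd w))
      (within (fun w : (R*R)*R => in_box2 l s (fst w) /\ in_cint l3 s3 (snd w))
              (locally (z, z3)))
      (locally (h z z3)).

(* y with y_j = yj and y_j' = yj'; j = true means (j, j') = (1, 2),
   j = false means (j, j') = (2, 1). *)
Definition mky (j : bool) (yj yj' : R) : R*R := if j then (yj, yj') else (yj', yj).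

(* Main.v *)
Require Import Defs.
From Stdlib Require Import Reals.
From Coquelicot Require Import Coquelicot.
Open Scope R_scope.
From Stdlib Require Import Arith Lra Lia Psatz ClassicalEpsilon.

Definition polyd (c : R) (d : nat) (P : R -> R) : Prop :=
  exists coef : nat -> R, forall t, P t = sum_f_R0 (fun i => coef i * (t - c) ^ i) d.

Lemma polyd_ext c d P Q : (forall t, P t = Q t) -> polyd c d P -> polyd c d Q.
Proof. intros H [co Hc]; exists co; intro t; rewrite <- H; apply Hc. Qed.

Lemma polyd_S c d P : polyd c d P -> polyd c (S d) P.
Proof.
  intros [co Hc]. exists (fun i => if le_lt_dec i d then co i else 0).
  intro t. rewrite tech5, Hc. destruct (le_lt_dec (S d) d); [lia|].
  rewrite Rmult_0_l, Rplus_0_r. apply sum_eq. intros i Hi.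
  destruct (le_lt_dec i d); [reflexivity|lia].
Qed.

Lemma polyd_le c d d' P : (d <= d')%nat -> polyd c d P -> polyd c d' P.
Proof. induction 1; auto. intro; apply polyd_S; auto. Qed.

Lemma polyd_const c k : polyd c 0 (fun _ => k).
Proof. exists (fun _ => k). intro t; simpl; ring. Qed.

Lemma polyd_plus c d P Q : polyd c d P -> polyd c d Q -> polyd c d (fun t => P t + Q t).
Proof.
  intros [a Ha] [b Hb]. exists (fun i => a i + b i). intro t.
  rewrite Ha, Hb, <- sum_plus. apply sum_eq; intros; ring.
Qed.

Lemma polyd_scal c d k P : polyd c d P -> polyd c d (fun t => k * P t).
Proof.
  intros [a Ha]. exists (fun i => k * a i). intro t.
  rewrite Ha, scal_sum. apply sum_eq; intros; ring.
Qed.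

Lemma polyd_mulX c d x P : polyd c d P -> polyd c (S d) (fun t => (t - x) * P t).
Proof.
  intros HP. assert (HP' := polyd_S _ _ _ HP).
  destruct HP as [a Ha]. destruct HP' as [b Hb].
  exists (fun i => (match i with 0%nat => 0 | S j => a j end) + (c - x) * b i).
  intro t.
  transitivity (sum_f_R0 (fun i => (match i with 0%nat => 0 | S j => a j end) * (t - c) ^ i) (S d)
     + sum_f_R0 (fun i => (c - x) * b i * (t - c) ^ i) (S d));
    [| rewrite <- sum_plus; apply sum_eq; intros; ring].
  replace ((t - x) * P t) with ((t - c) * P t + (c - x) * P t) by ring.
  f_equal.
  - rewrite decomp_sum by lia. simpl pred. rewrite Ha, scal_sum.
    simpl. rewrite Rmult_0_l, Rplus_0_l. apply sum_eq; intros; ring.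
  - rewrite Hb, scal_sum. apply sum_eq; intros; ring.
Qed.

Lemma is_derive_sum (F : nat -> R -> R) (dF : nat -> R) t n :
  (forall i, is_derive (F i) t (dF i)) ->
  is_derive (fun u => sum_f_R0 (fun i => F i u) n) t (sum_f_R0 dF n).
Proof.
  intro H. induction n; simpl.
  - apply H.
  - apply (is_derive_plus (fun u => sum_f_R0 (fun i => F i u) n) (F (S n))); auto.
Qed.

Lemma polyd_deriv c d G : polyd c (S d) G ->
  exists P, polyd c d P /\ forall t, is_derive G t (P t).
Proof.
  intros [a Ha].
  exists (fun t => sum_f_R0 (fun i => (a (S i) * INR (S i)) * (t - c) ^ i) d).
  split. { exists (fun i => a (S i) * INR (S i)). intro; reflexivity. }
  intro t.
  replace (sum_f_R0 (fun i => a (S i) * INR (S i) * (t - c) ^ i) d)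
    with (0 + sum_f_R0 (fun i => a (S i) * INR (S i) * (t - c) ^ i) d) by ring.
  apply is_derive_ext with
    (f := fun u => a 0%nat * (u - c) ^ 0 +
            sum_f_R0 (fun i => (fun i u => a (S i) * (u - c) ^ (S i)) i u) d).
  { intro u. rewrite Ha, (decomp_sum (fun i => a i * (u - c) ^ i) (S d)) by lia. reflexivity. }
  apply (is_derive_plus (fun u => a 0%nat * (u - c) ^ 0)).
  - auto_derive; [exact I|]. simpl. ring.
  - apply is_derive_sum. intro i.
    auto_derive; [exact I|]. change (match i with 0%nat => 1 | S _ => INR i + 1 end) with (INR (S i)). unfold Rminus; ring.
Qed.

Lemma polyd_cont c d P t : polyd c d P -> continuous P t.
Proof.
  intro H. apply polyd_S in H. apply polyd_deriv in H as [Q [_ HQ]].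
  apply (@ex_derive_continuous R_AbsRing R_NormedModule). eexists; apply HQ.
Qed.

Fixpoint prodW (x : nat -> R) (K : nat) (t : R) : R :=
  match K with 0%nat => t - x 0%nat | S K' => (t - x (S K')) * prodW x K' t end.

Lemma prodW_poly c x K : polyd c (S K) (prodW x K).
Proof.
  induction K.
  - apply polyd_ext with (P := fun t => (t - x 0%nat) * 1).
    { intro; simpl; ring. }
    apply polyd_mulX, polyd_const.
  - apply polyd_ext with (P := fun t => (t - x (S K)) * prodW x K t).
    { intro; reflexivity. }
    apply polyd_mulX; auto.
Qed.

Lemma prodW_root x K k : (k <= K)%nat -> prodW x K (x k) = 0.
Proof.
  induction K; intro Hk; simpl.
  - assert (k = 0%nat) by lia; subst; ring.
  - destruct (Nat.eq_dec k (S K)). subst; ring.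
    rewrite IHK by lia; ring.
Qed.

Lemma prodW_nz x K t : (forall j, (j <= K)%nat -> t <> x j) -> prodW x K t <> 0.
Proof.
  induction K; intro H; simpl.
  - specialize (H 0%nat (le_n _)). intro; apply H; lra.
  - apply Rmult_integral_contrapositive_currified.
    + specialize (H (S K) (le_n _)). intro; apply H; lra.
    + apply IHK; intros; apply H; lia.
Qed.

Lemma interp c x : (forall i j, (i < j)%nat -> x i < x j) ->
  forall K (y : nat -> R), exists G, polyd c K G /\ forall k, (k <= K)%nat -> G (x k) = y k.
Proof.
  intros Hx K y. induction K.
  - exists (fun _ => y 0%nat). split. apply polyd_const.
    intros k Hk. assert (k = 0%nat) by lia; subst; auto.
  - destruct IHK as [G [HG HGy]].
    set (W := prodW x K (x (S K))).
    assert (HW : W <> 0).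
    { apply prodW_nz. intros j Hj E. specialize (Hx j (S K)). assert (x j < x (S K)) by (apply Hx; lia). lra. }
    set (d := (y (S K) - G (x (S K))) / W).
    exists (fun t => G t + d * prodW x K t). split.
    + apply polyd_plus. apply polyd_S; auto. apply polyd_scal, prodW_poly.
    + intros k Hk. destruct (Nat.eq_dec k (S K)).
      * subst. fold W. unfold d. field; auto.
      * rewrite prodW_root by lia. rewrite HGy by lia. ring.
Qed.

Lemma ex_RInt_poly c d P a b : polyd c d P -> ex_RInt P a b.
Proof. intro H. apply (@ex_RInt_continuous R_CompleteNormedModule). intros; eapply polyd_cont; eauto. Qed.

Lemma dlo_lt l s n i j : 0 < s -> (i < j)%nat -> dlo l s n i < dlo l s n j.
Proof.
  intros Hs Hij. unfold dlo. apply lt_INR in Hij.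
  assert (0 < 2 ^ n) by (apply pow_lt; lra).
  unfold Rdiv. apply Rplus_lt_compat_l. apply Rmult_lt_compat_r.
  apply Rinv_0_lt_compat; auto. apply Rmult_lt_compat_r; auto.
Qed.

Lemma pow2_pos n : (1 <= 2 ^ n)%nat.
Proof. induction n; simpl; lia. Qed.

Lemma dual1 l s c n i : 0 < s -> exists phi, polyd c (2 ^ n - 1) phi /\
  forall k, (k < 2 ^ n)%nat ->
    RInt phi (dlo l s n k) (dhi l s n k) = if Nat.eqb i k then 1 else 0.
Proof.
  intro Hs.
  destruct (interp c (dlo l s n) (fun i j H => dlo_lt l s n i j Hs H) (2 ^ n)
     (fun k => if Nat.ltb i k then 1 else 0)) as [G [HG HGy]].
  assert (E : (2 ^ n = S (2 ^ n - 1))%nat) by (pose proof (pow2_pos n); lia).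
  rewrite E in HG. apply polyd_deriv in HG as [phi [Hphi Hd]].
  exists phi; split; auto. intros k Hk.
  assert (Hr : is_RInt phi (dlo l s n k) (dhi l s n k) (minus (G (dhi l s n k)) (G (dlo l s n k)))).
  { apply (@is_RInt_derive R_CompleteNormedModule). intros; apply Hd. intros; eapply polyd_cont; eauto. }
  apply (@is_RInt_unique R_CompleteNormedModule) in Hr. rewrite Hr.
  replace (dhi l s n k) with (dlo l s n (S k)) by reflexivity.
  rewrite !HGy by lia. unfold minus, plus, opp; simpl.
  destruct (Nat.eqb_spec i k); destruct (Nat.ltb_spec i (S k)); destruct (Nat.ltb_spec i k);
    try lia; ring.
Qed.

Lemma dual_fam l s c n : 0 < s -> exists phi : nat -> R -> R, forall i,
  polyd c (2 ^ n - 1) (phi i) /\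
  forall k, (k < 2 ^ n)%nat ->
    RInt (phi i) (dlo l s n k) (dhi l s n k) = if Nat.eqb i k then 1 else 0.
Proof.
  intro Hs.
  exists (fun i => proj1_sig (constructive_indefinite_description _ (dual1 l s c n i Hs))).
  intro i. exact (proj2_sig (constructive_indefinite_description _ (dual1 l s c n i Hs))).
Qed.

Lemma polyd_sum c d (F : nat -> R -> R) K :
  (forall i, polyd c d (F i)) -> polyd c d (fun t => sum_f_R0 (fun i => F i t) K).
Proof.
  intro H. induction K; simpl. apply polyd_ext with (P := F 0%nat); auto.
  apply polyd_plus; auto.
Qed.

Lemma RInt_scalR (f : R -> R) a b k : ex_RInt f a b -> RInt (fun x => k * f x) a b = k * RInt f a b.
Proof. intro H. exact (RInt_scal f a b k H). Qed.

Lemma ex_RInt_scalR (f : R -> R) a b k : ex_RInt f a b -> ex_RInt (fun x => k * f x) a b.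
Proof. intro H. exact (ex_RInt_scal f a b k H). Qed.

Lemma ex_RInt_sum (F : nat -> R -> R) a b K : (forall i, ex_RInt (F i) a b) ->
  ex_RInt (fun x => sum_f_R0 (fun i => F i x) K) a b.
Proof.
  intro H. induction K; simpl. apply H.
  exact (ex_RInt_plus (fun x => sum_f_R0 (fun i => F i x) K) (F (S K)) a b IHK (H _)).
Qed.

Lemma RInt_sum (F : nat -> R -> R) a b K : (forall i, ex_RInt (F i) a b) ->
  RInt (fun x => sum_f_R0 (fun i => F i x) K) a b = sum_f_R0 (fun i => RInt (F i) a b) K.
Proof.
  intro H. induction K; simpl. reflexivity.
  rewrite <- IHK.
  exact (RInt_plus (fun x => sum_f_R0 (fun i => F i x) K) (F (S K)) a b
           (ex_RInt_sum F a b K H) (H _)).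
Qed.

Lemma sum_zero_kron (g : nat -> R) k K : (K < k)%nat ->
  sum_f_R0 (fun i => g i * (if Nat.eqb i k then 1 else 0)) K = 0.
Proof.
  induction K; intro H.
  - destruct k; [lia|simpl; ring].
  - rewrite tech5, IHK by lia. destruct (Nat.eqb_spec (S K) k); [lia|ring].
Qed.

Lemma sum_kron (g : nat -> R) k K : (k <= K)%nat ->
  sum_f_R0 (fun i => g i * (if Nat.eqb i k then 1 else 0)) K = g k.
Proof.
  intro Hk. induction K.
  - assert (k = 0%nat) by lia; subst; simpl; ring.
  - rewrite tech5. destruct (Nat.eq_dec k (S K)).
    + subst. rewrite Nat.eqb_refl, sum_zero_kron by lia. ring.
    + rewrite IHK by lia. destruct (Nat.eqb_spec (S K) k); [lia|ring].
Qed.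

Lemma poly2_ext n c P Q : (forall z, P z = Q z) -> poly2 n c P -> poly2 n c Q.
Proof. intros H [co Hc]; exists co; intro z; rewrite <- H; apply Hc. Qed.

Lemma poly2_plus n c P Q : poly2 n c P -> poly2 n c Q -> poly2 n c (fun z => P z + Q z).
Proof.
  intros [a Ha] [b Hb]. exists (fun i j => a i j + b i j). intro z.
  rewrite Ha, Hb, <- sum_plus. apply sum_eq; intros.
  rewrite <- sum_plus. apply sum_eq; intros. ring.
Qed.

Lemma poly2_prod n c phi psi : polyd (fst c) (2 ^ n - 1) phi -> polyd (snd c) (2 ^ n - 1) psi ->
  poly2 n c (fun z => phi (fst z) * psi (snd z)).
Proof.
  intros [a Ha] [b Hb]. exists (fun i j => a i * b j). intro z.
  rewrite Ha, Hb.
  set (B := sum_f_R0 (fun i => b i * (snd z - snd c) ^ i) (2 ^ n - 1)).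
  rewrite (Rmult_comm _ B), scal_sum. apply sum_eq; intros. unfold B.
  rewrite scal_sum. apply sum_eq; intros. ring.
Qed.

Lemma poly2_sum n c (F : nat -> R * R -> R) K :
  (forall i, poly2 n c (F i)) -> poly2 n c (fun z => sum_f_R0 (fun i => F i z) K).
Proof.
  intro H. induction K; simpl. apply poly2_ext with (P := F 0%nat); auto.
  apply poly2_plus; auto.
Qed.

Lemma Pn2_exists (l s c : R * R) n (m : nat -> nat -> R) :
  0 < fst s -> 0 < snd s -> exists P, poly2 n c P /\
  (forall u a b, ex_RInt (fun v => P (u, v)) a b) /\
  (forall a b a' b', ex_RInt (fun u => RInt (fun v => P (u, v)) a' b') a b) /\
  forall k1 k2, (k1 < 2 ^ n)%nat -> (k2 < 2 ^ n)%nat ->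
    int2 P (dlo (fst l) (fst s) n k1) (dhi (fst l) (fst s) n k1)
           (dlo (snd l) (snd s) n k2) (dhi (snd l) (snd s) n k2) = m k1 k2.
Proof.
  intros H1 H2.
  destruct (dual_fam (fst l) (fst s) (fst c) n H1) as [phi Hphi].
  destruct (dual_fam (snd l) (snd s) (snd c) n H2) as [psi Hpsi].
  set (K := (2 ^ n - 1)%nat).
  set (chi := fun i v => sum_f_R0 (fun j => m i j * psi j v) K).
  assert (Hchi : forall i, polyd (snd c) K (chi i)).
  { intro i. apply polyd_sum. intro j. apply polyd_scal, Hpsi. }
  exists (fun z => sum_f_R0 (fun i => phi i (fst z) * chi i (snd z)) K).
  split.
  { apply poly2_sum. intro i. apply poly2_prod; auto. apply Hphi. }
  split.
  { intros u a b. simpl. apply ex_RInt_sum. intro i. apply ex_RInt_scalR.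
    eapply ex_RInt_poly; eauto. }
  split.
  { intros a b a' b'. simpl.
    apply (ex_RInt_ext (fun u => sum_f_R0 (fun i => RInt (chi i) a' b' * phi i u) K)).
    - intros u _. rewrite RInt_sum.
      + apply sum_eq. intros i _. rewrite RInt_scalR. ring.
        eapply ex_RInt_poly; eauto.
      + intro i. apply ex_RInt_scalR. eapply ex_RInt_poly; eauto.
    - eapply ex_RInt_poly. apply polyd_sum. intro i. apply polyd_scal, Hphi. }
  intros k1 k2 Hk1 Hk2. unfold int2. simpl.
  assert (Hin : forall i, RInt (chi i) (dlo (snd l) (snd s) n k2) (dhi (snd l) (snd s) n k2) = m i k2).
  { intro i. unfold chi. rewrite RInt_sum.
    - rewrite (sum_eq _ (fun j => m i j * (if Nat.eqb j k2 then 1 else 0))).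
      apply (sum_kron (fun j => m i j)). unfold K; lia.
      intros j _. rewrite RInt_scalR. rewrite (proj2 (Hpsi j)); auto.
      eapply ex_RInt_poly, Hpsi.
    - intro j. apply ex_RInt_scalR. eapply ex_RInt_poly, Hpsi. }
  rewrite (RInt_ext _ (fun u => sum_f_R0 (fun i => m i k2 * phi i u) K)).
  - rewrite RInt_sum.
    + rewrite (sum_eq _ (fun i => m i k2 * (if Nat.eqb i k1 then 1 else 0))).
      apply (sum_kron (fun i => m i k2)). unfold K; lia.
      intros i _. rewrite RInt_scalR. rewrite (proj2 (Hphi i)); auto.
      eapply ex_RInt_poly, Hphi.
    + intro i. apply ex_RInt_scalR. eapply ex_RInt_poly, Hphi.
  - intros u _. rewrite RInt_sum.
    + apply sum_eq. intros i _. rewrite RInt_scalR. rewrite Hin. ring.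
      eapply ex_RInt_poly; eauto.
    + intro i. apply ex_RInt_scalR. eapply ex_RInt_poly; eauto.
Qed.

Ltac rring := match goal with |- @eq _ ?x ?y => change (@eq R x y) end; ring.

Definition lip2 (H : R * R -> R) (L : R) : Prop :=
  0 <= L /\ forall z z', Rabs (H z - H z') <= L * (Rabs (fst z - fst z') + Rabs (snd z - snd z')).

Lemma small_mul L x e : 0 <= L -> 0 < e -> x < e / (L + 1) -> L * x < e.
Proof.
  intros HL He Hx. assert (x * (L + 1) < e).
  { assert (x * (L + 1) < e / (L + 1) * (L + 1)) by (apply Rmult_lt_compat_r; lra).
    replace (e / (L + 1) * (L + 1)) with e in H by (field; lra). exact H. }
  destruct (Rle_dec 0 x); nra.
Qed.

Lemma posdiv e L : 0 < e -> 0 <= L -> 0 < e / (L + 1).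
Proof. intros; apply Rdiv_lt_0_compat; lra. Qed.

Lemma lip2_cont_v H L u v0 : lip2 H L -> continuous (fun v => H (u, v)) v0.
Proof.
  intros [HL Hl]. apply filterlim_locally. intro eps.
  exists (mkposreal _ (posdiv eps L (cond_pos eps) HL)). intros v Hv.
  change (Rabs (v - v0) < eps / (L + 1)) in Hv.
  change (Rabs (H (u, v) - H (u, v0)) < eps).
  eapply Rle_lt_trans. apply Hl. simpl. rewrite Rminus_diag, Rabs_R0, Rplus_0_l.
  apply small_mul; auto. apply cond_pos.
Qed.

Lemma RInt_minusR (f g : R -> R) a b : ex_RInt f a b -> ex_RInt g a b ->
  RInt (fun x => f x - g x) a b = RInt f a b - RInt g a b.
Proof. intros; exact (RInt_minus f g a b H H0). Qed.

Lemma ex_RInt_minusR (f g : R -> R) a b : ex_RInt f a b -> ex_RInt g a b ->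
  ex_RInt (fun x => f x - g x) a b.
Proof. intros; exact (ex_RInt_minus f g a b H H0). Qed.

Lemma RInt_constR a b (k : R) : RInt (fun _ => k) a b = (b - a) * k.
Proof. exact (RInt_const a b k). Qed.

Lemma ex_RInt_cont (f : R -> R) a b : (forall z, continuous f z) -> ex_RInt f a b.
Proof. intro H. apply (@ex_RInt_continuous R_CompleteNormedModule). intros; apply H. Qed.

Lemma ex_RInt_constR a b (k : R) : ex_RInt (fun _ => k) a b.
Proof. apply ex_RInt_cont. intro; apply continuous_const. Qed.

Lemma lip2_outer H L c d u0 : lip2 H L -> c <= d ->
  continuous (fun u => RInt (fun v => H (u, v)) c d) u0.
Proof.
  intros HH Hcd. pose proof HH as [HL Hl]. apply filterlim_locally. intro eps.
  assert (HK : 0 <= (d - c) * L) by (apply Rmult_le_pos; lra).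
  exists (mkposreal _ (posdiv eps _ (cond_pos eps) HK)). intros u Hu.
  change (Rabs (u - u0) < eps / ((d - c) * L + 1)) in Hu.
  change (Rabs (RInt (fun v => H (u, v)) c d - RInt (fun v => H (u0, v)) c d) < eps).
  rewrite <- RInt_minusR by (apply ex_RInt_cont; intro; eapply lip2_cont_v; eauto).
  eapply Rle_lt_trans.
  apply (abs_RInt_le_const _ c d (L * Rabs (u - u0))); auto.
  apply ex_RInt_minusR; apply ex_RInt_cont; intro; eapply lip2_cont_v; eauto.
  intros t _. eapply Rle_trans. apply Hl. simpl. rewrite Rminus_diag, Rabs_R0, Rplus_0_r. lra.
  rewrite <- Rmult_assoc. apply small_mul; auto. apply cond_pos.
Qed.

Lemma int2_bound H L a b c d y e : lip2 H L -> a <= b -> c <= d ->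
  (forall u v, a <= u <= b -> c <= v <= d -> Rabs (H (u, v) - y) <= e) ->
  Rabs (int2 H a b c d - y * ((b - a) * (d - c))) <= e * ((b - a) * (d - c)).
Proof.
  intros HH Hab Hcd Hb. unfold int2.
  assert (Ei : forall u, ex_RInt (fun v => H (u, v)) c d).
  { intro u; apply ex_RInt_cont; intro; eapply lip2_cont_v; eauto. }
  assert (Eo : ex_RInt (fun u => RInt (fun v => H (u, v)) c d) a b).
  { apply ex_RInt_cont; intro; eapply lip2_outer; eauto. }
  assert (Hin : forall u, a <= u <= b ->
            Rabs (RInt (fun v => H (u, v)) c d - y * (d - c)) <= (d - c) * e).
  { intros u Hu. replace (y * (d - c)) with (RInt (fun _ => y) c d) by (rewrite RInt_constR; rring).
    rewrite <- RInt_minusR; [| apply Ei | apply ex_RInt_constR].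
    apply abs_RInt_le_const; auto.
    apply ex_RInt_minusR; [apply Ei | apply ex_RInt_constR]. }
  replace (y * ((b - a) * (d - c))) with (RInt (fun _ => y * (d - c)) a b) by (rewrite RInt_constR; rring).
  rewrite <- RInt_minusR; [| apply Eo | apply ex_RInt_constR].
  replace (e * ((b - a) * (d - c))) with ((b - a) * ((d - c) * e)) by ring.
  apply abs_RInt_le_const; auto.
  apply ex_RInt_minusR; [apply Eo | apply ex_RInt_constR].
Qed.

Lemma pow2_gt0 n : 0 < 2 ^ n.
Proof. apply pow_lt; lra. Qed.

Lemma dhi_dlo l s n k : dhi l s n k - dlo l s n k = s / 2 ^ n.
Proof. unfold dhi, dlo. rewrite S_INR. field. apply Rgt_not_eq, pow2_gt0. Qed.

Lemma dlo_ge l s n k : 0 < s -> l <= dlo l s n k.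
Proof.
  intro Hs. unfold dlo. pose proof (pos_INR k). pose proof (pow2_gt0 n).
  assert (0 <= INR k * s / 2 ^ n) by (apply Rmult_le_pos; [nra| left; apply Rinv_0_lt_compat; auto]).
  lra.
Qed.

Lemma dhi_le l s n k : 0 < s -> (k < 2 ^ n)%nat -> dhi l s n k <= l + s.
Proof.
  intros Hs Hk. unfold dhi. pose proof (pow2_gt0 n).
  assert (INR (S k) <= 2 ^ n).
  { replace (2 ^ n) with (INR (2 ^ n)). apply le_INR; lia.
    rewrite pow_INR. reflexivity. }
  assert (INR (S k) * s / 2 ^ n <= s).
  { unfold Rdiv. apply (Rmult_le_reg_r (2 ^ n)); auto.
    rewrite Rmult_assoc, Rinv_l by lra. nra. }
  lra.
Qed.

Lemma dlo_le_dhi l s n k : 0 < s -> dlo l s n k <= dhi l s n k.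
Proof.
  intro Hs. pose proof (dhi_dlo l s n k). pose proof (pow2_gt0 n).
  assert (0 < s / 2 ^ n) by (apply Rdiv_lt_0_compat; auto). lra.
Qed.

Lemma INR_le_pow2 N : INR N <= 2 ^ N.
Proof.
  induction N. simpl; lra.
  rewrite S_INR. simpl. pose proof (pow2_gt0 N).
  assert (1 <= 2 ^ N). { clear. induction N; simpl; lra. } lra.
Qed.

Lemma avg_close (l s : R * R) H L z eps : 0 < fst s -> 0 < snd s -> lip2 H L -> 0 < eps ->
  exists N : nat, forall n : nat, (N <= n)%nat ->
  forall i1 i2 : nat, (i1 < 2 ^ n)%nat -> (i2 < 2 ^ n)%nat ->
    dlo (fst l) (fst s) n i1 <= fst z <= dhi (fst l) (fst s) n i1 ->
    dlo (snd l) (snd s) n i2 <= snd z <= dhi (snd l) (snd s) n i2 ->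
    Rabs (/ (fst s / 2 ^ n * (snd s / 2 ^ n)) *
            int2 H (dlo (fst l) (fst s) n i1) (dhi (fst l) (fst s) n i1)
                   (dlo (snd l) (snd s) n i2) (dhi (snd l) (snd s) n i2)
          - H z) < eps.
Proof.
  intros H1 H2 HH Heps. pose proof HH as [HL Hl].
  set (K := L * (fst s + snd s)).
  assert (HK : 0 <= K) by (unfold K; apply Rmult_le_pos; lra).
  destruct (archimed_cor1 (eps / (K + 1)) (posdiv _ _ Heps HK)) as [N [HN HN0]].
  exists N. intros n Hn i1 i2 Hi1 Hi2 Hz1 Hz2.
  pose proof (pow2_gt0 n) as Hp.
  set (e := K / 2 ^ n).
  assert (He : e < eps).
  { assert (INR N <= 2 ^ n).
    { eapply Rle_trans. apply INR_le_pow2. apply Rle_pow; auto; lra. }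
    assert (0 < INR N) by (apply lt_0_INR; lia).
    assert (/ 2 ^ n <= / INR N) by (apply Rinv_le_contravar; auto).
    assert (K * / INR N <= K * (eps / (K + 1))) by (apply Rmult_le_compat_l; lra).
    assert (K * (eps / (K + 1)) < eps).
    { replace (K * (eps / (K + 1))) with (eps - eps / (K + 1)) by (field; lra).
      pose proof (posdiv _ _ Heps HK). lra. }
    unfold e, Rdiv. nra. }
  set (a := dlo (fst l) (fst s) n i1). set (b := dhi (fst l) (fst s) n i1).
  set (c := dlo (snd l) (snd s) n i2). set (d := dhi (snd l) (snd s) n i2).
  assert (Eab : b - a = fst s / 2 ^ n) by apply dhi_dlo.
  assert (Ecd : d - c = snd s / 2 ^ n) by apply dhi_dlo.
  assert (HB : Rabs (int2 H a b c d - H z * ((b - a) * (d - c))) <= e * ((b - a) * (d - c))).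
  { apply (int2_bound H L); auto.
    unfold a, b; apply dlo_le_dhi; auto. unfold c, d; apply dlo_le_dhi; auto.
    intros u v Hu Hv. replace (H (u, v) - H z) with (H (u, v) - H z) by ring.
    eapply Rle_trans. apply Hl. simpl.
    unfold e, K. replace (L * (fst s + snd s) / 2 ^ n) with (L * ((b - a) + (d - c)))
      by (rewrite Eab, Ecd; field; lra).
    apply Rmult_le_compat_l; auto.
    apply Rplus_le_compat; apply Rabs_le; split; fold a b c d in Hz1, Hz2; lra. }
  rewrite <- Eab, <- Ecd.
  assert (HA : 0 < (b - a) * (d - c)).
  { rewrite Eab, Ecd. apply Rmult_lt_0_compat; apply Rdiv_lt_0_compat; auto. }
  assert (0 < b - a) by (rewrite Eab; apply Rdiv_lt_0_compat; auto).
  assert (0 < d - c) by (rewrite Ecd; apply Rdiv_lt_0_compat; auto).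
  replace (/ ((b - a) * (d - c)) * int2 H a b c d - H z)
    with (/ ((b - a) * (d - c)) * (int2 H a b c d - H z * ((b - a) * (d - c)))) by (field; split; lra).
  rewrite Rabs_mult, Rabs_inv, (Rabs_pos_eq ((b - a) * (d - c))) by lra.
  apply (Rmult_lt_reg_l ((b - a) * (d - c))); auto.
  rewrite <- Rmult_assoc, Rinv_r, Rmult_1_l by lra. nra.
Qed.

Lemma box_in (l s : R * R) n k1 k2 u v : 0 < fst s -> 0 < snd s ->
  (k1 < 2 ^ n)%nat -> (k2 < 2 ^ n)%nat ->
  dlo (fst l) (fst s) n k1 <= u <= dhi (fst l) (fst s) n k1 ->
  dlo (snd l) (snd s) n k2 <= v <= dhi (snd l) (snd s) n k2 ->
  in_box2 l s (u, v).
Proof.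
  intros H1 H2 Hk1 Hk2 Hu Hv.
  pose proof (dlo_ge (fst l) (fst s) n k1 H1). pose proof (dhi_le (fst l) (fst s) n k1 H1 Hk1).
  pose proof (dlo_ge (snd l) (snd s) n k2 H2). pose proof (dhi_le (snd l) (snd s) n k2 H2 Hk2).
  split; unfold in_cint; simpl; lra.
Qed.

Lemma int2_box_ext (l s : R * R) n k1 k2 h H : 0 < fst s -> 0 < snd s ->
  (k1 < 2 ^ n)%nat -> (k2 < 2 ^ n)%nat ->
  (forall z, in_box2 l s z -> h z = H z) ->
  int2 h (dlo (fst l) (fst s) n k1) (dhi (fst l) (fst s) n k1)
         (dlo (snd l) (snd s) n k2) (dhi (snd l) (snd s) n k2) =
  int2 H (dlo (fst l) (fst s) n k1) (dhi (fst l) (fst s) n k1)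
         (dlo (snd l) (snd s) n k2) (dhi (snd l) (snd s) n k2).
Proof.
  intros H1 H2 Hk1 Hk2 Hh. unfold int2.
  pose proof (dlo_le_dhi (fst l) (fst s) n k1 H1). pose proof (dlo_le_dhi (snd l) (snd s) n k2 H2).
  apply RInt_ext. intros u Hu. rewrite Rmin_left, Rmax_right in Hu by lra.
  apply RInt_ext. intros v Hv. rewrite Rmin_left, Rmax_right in Hv by lra.
  apply Hh. apply (box_in l s n k1 k2); auto; lra.
Qed.

Lemma Pn_limit2_lip (l s c : R * R) h H L : 0 < fst s -> 0 < snd s -> lip2 H L ->
  (forall z, in_box2 l s z -> h z = H z) -> Pn_limit2 l s c h.
Proof.
  intros H1 H2 HH Hh. split.
  - intro n.
    destruct (Pn2_exists l s c n (fun k1 k2 =>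
       int2 h (dlo (fst l) (fst s) n k1) (dhi (fst l) (fst s) n k1)
              (dlo (snd l) (snd s) n k2) (dhi (snd l) (snd s) n k2)) H1 H2)
      as [P [HP [_ [_ HPi]]]].
    exists P. split; auto.
  - intros hs Hhs z Hz1 Hz2 eps Heps.
    destruct (avg_close l s H L z eps H1 H2 HH Heps) as [N HN].
    exists N. intros n Hn i1 i2 Hi1 Hi2 Hzz1 Hzz2.
    rewrite (proj2 (Hhs n) i1 i2 Hi1 Hi2).
    rewrite (int2_box_ext l s n i1 i2 h H) by auto.
    rewrite Hh by (split; auto). apply HN; auto.
Qed.

Lemma int3_of2 (g : R * R -> R) a1 b1 a2 b2 a3 b3 :
  (forall u, ex_RInt (fun v => g (u, v)) a2 b2) ->
  ex_RInt (fun u => RInt (fun v => g (u, v)) a2 b2) a1 b1 ->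
  int3 (fun z _ => g z) a1 b1 a2 b2 a3 b3 = (b3 - a3) * int2 g a1 b1 a2 b2.
Proof.
  intros Ei Eo. unfold int3, int2.
  rewrite <- RInt_scalR by auto. apply RInt_ext. intros u _.
  rewrite <- RInt_scalR by auto. apply RInt_ext. intros v _.
  apply RInt_constR.
Qed.

Lemma poly3_of2 n c c3 P : poly2 n c P -> poly3 n c c3 (fun z _ => P z).
Proof.
  intros [co Hc]. exists (fun i1 i2 i3 => co i1 i2 * (if Nat.eqb i3 0 then 1 else 0)).
  intros z z3. rewrite Hc. apply sum_eq; intros i1 _. apply sum_eq; intros i2 _.
  rewrite (sum_eq _ (fun i3 => (co i1 i2 * (fst z - fst c) ^ i1 * (snd z - snd c) ^ i2 * (z3 - c3) ^ i3)
            * (if Nat.eqb i3 0 then 1 else 0))).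
  rewrite (sum_kron (fun i3 => co i1 i2 * (fst z - fst c) ^ i1 * (snd z - snd c) ^ i2 * (z3 - c3) ^ i3)).
  simpl; ring. lia.
  intros; ring.
Qed.

Lemma Pn_limit3_lip (l s : R * R) l3 s3 c c3 h H L : 0 < fst s -> 0 < snd s -> 0 < s3 ->
  lip2 H L -> (forall z, in_box2 l s z -> h z = H z) ->
  Pn_limit3 l s l3 s3 c c3 (fun z _ => h z).
Proof.
  intros H1 H2 H3 HH Hh.
  assert (Ei : forall u a b, ex_RInt (fun v => H (u, v)) a b).
  { intros u a b; apply ex_RInt_cont; intro; eapply lip2_cont_v; eauto. }
  assert (Eo : forall n k2, ex_RInt (fun u => RInt (fun v => H (u, v))
              (dlo (snd l) (snd s) n k2) (dhi (snd l) (snd s) n k2)) 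
              (dlo (fst l) (fst s) n k2) (dhi (fst l) (fst s) n k2) -> True) by auto.
  assert (Eo' : forall a b c d, c <= d -> ex_RInt (fun u => RInt (fun v => H (u, v)) c d) a b).
  { intros a b c' d Hcd; apply ex_RInt_cont; intro; eapply lip2_outer; eauto. }
  assert (Hp : forall n k1 k2 k3, (k1 < 2 ^ n)%nat -> (k2 < 2 ^ n)%nat ->
     int3 (fun z _ => h z) (dlo (fst l) (fst s) n k1) (dhi (fst l) (fst s) n k1)
             (dlo (snd l) (snd s) n k2) (dhi (snd l) (snd s) n k2)
             (dlo l3 s3 n k3) (dhi l3 s3 n k3) =
     (dhi l3 s3 n k3 - dlo l3 s3 n k3) *
     int2 H (dlo (fst l) (fst s) n k1) (dhi (fst l) (fst s) n k1)
             (dlo (snd l) (snd s) n k2) (dhi (snd l) (snd s) n k2)).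
  { intros n k1 k2 k3 Hk1 Hk2. rewrite <- int3_of2.
    - unfold int3.
      pose proof (dlo_le_dhi (fst l) (fst s) n k1 H1). pose proof (dlo_le_dhi (snd l) (snd s) n k2 H2).
      apply RInt_ext. intros u Hu. rewrite Rmin_left, Rmax_right in Hu by lra.
      apply RInt_ext. intros v Hv. rewrite Rmin_left, Rmax_right in Hv by lra.
      rewrite Hh. reflexivity. apply (box_in l s n k1 k2); auto; lra.
    - auto.
    - apply Eo'. apply dlo_le_dhi; auto. }
  split.
  - intro n.
    destruct (Pn2_exists l s c n (fun k1 k2 =>
       int2 H (dlo (fst l) (fst s) n k1) (dhi (fst l) (fst s) n k1)
              (dlo (snd l) (snd s) n k2) (dhi (snd l) (snd s) n k2)) H1 H2)
      as [P [HP [Pi [Po HPi]]]].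
    exists (fun z _ => P z). split. apply poly3_of2; auto.
    intros i1 i2 i3 Hi1 Hi2 Hi3. rewrite Hp by auto. rewrite int3_of2 by auto.
    rewrite HPi by auto. reflexivity.
  - intros hs Hhs z z3 Hz1 Hz2 Hz3 eps Heps.
    destruct (avg_close l s H L z eps H1 H2 HH Heps) as [N HN].
    exists N. intros n Hn i1 i2 i3 Hi1 Hi2 Hi3 Hzz1 Hzz2 Hzz3.
    rewrite (proj2 (Hhs n) i1 i2 i3 Hi1 Hi2 Hi3).
    rewrite Hp by auto. rewrite dhi_dlo.
    rewrite Hh by (split; auto).
    pose proof (pow2_gt0 n).
    assert (0 < s3 / 2 ^ n) by (apply Rdiv_lt_0_compat; auto).
    assert (0 < fst s / 2 ^ n) by (apply Rdiv_lt_0_compat; auto).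
    assert (0 < snd s / 2 ^ n) by (apply Rdiv_lt_0_compat; auto).
    replace (/ (fst s / 2 ^ n * (snd s / 2 ^ n) * (s3 / 2 ^ n)) *
       (s3 / 2 ^ n * int2 H (dlo (fst l) (fst s) n i1) (dhi (fst l) (fst s) n i1)
                  (dlo (snd l) (snd s) n i2) (dhi (snd l) (snd s) n i2)))
      with (/ (fst s / 2 ^ n * (snd s / 2 ^ n)) *
            int2 H (dlo (fst l) (fst s) n i1) (dhi (fst l) (fst s) n i1)
                  (dlo (snd l) (snd s) n i2) (dhi (snd l) (snd s) n i2))
      by (field; repeat split; lra).
    apply HN; auto.
Qed.

Lemma deriv_cpt (h : R -> R) dh w : is_derive h w dh -> continuity_pt h w.
Proof.
  intro H. apply continuity_pt_filterlim.
  apply (@ex_derive_continuous R_AbsRing R_NormedModule). eexists; exact H.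
Qed.

Lemma mvt_exact (h dh : R -> R) u v : (forall w, is_derive h w (dh w)) ->
  exists xi, Rmin u v <= xi <= Rmax u v /\ h v - h u = dh xi * (v - u).
Proof.
  intro H. apply MVT_gen. intros; apply H. intros; eapply deriv_cpt; apply H.
Qed.

Lemma mvt_bound (h dh : R -> R) u v M : (forall w, is_derive h w (dh w)) ->
  (forall w, Rmin u v <= w <= Rmax u v -> Rabs (dh w) <= M) ->
  Rabs (h v - h u) <= M * Rabs (v - u).
Proof.
  intros H HM. destruct (mvt_exact h dh u v H) as [xi [Hxi E]].
  rewrite E, Rabs_mult. apply Rmult_le_compat_r. apply Rabs_pos. auto.
Qed.

Lemma mvt_lower (h dh : R -> R) u v m : (forall w, is_derive h w (dh w)) ->
  (forall w, Rmin u v <= w <= Rmax u v -> m <= dh w) -> u <= v ->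
  m * (v - u) <= h v - h u.
Proof.
  intros H HM Huv. destruct (mvt_exact h dh u v H) as [xi [Hxi E]].
  rewrite E. apply Rmult_le_compat_r. lra. auto.
Qed.

Lemma between_in u v w c r : Rabs (u - c) <= r -> Rabs (v - c) <= r ->
  Rmin u v <= w <= Rmax u v -> Rabs (w - c) <= r.
Proof.
  intros Hu Hv Hw. unfold Rmin, Rmax in Hw.
  destruct (Rle_dec u v); revert Hu Hv; split_Rabs; lra.
Qed.

Definition cube (a : R * R) (s0 t0 rho : R) (x : R * R) (s t : R) : Prop :=
  Rabs (fst x - fst a) <= rho /\ Rabs (snd x - snd a) <= rho /\
  Rabs (s - s0) <= rho /\ Rabs (t - t0) <= rho.

Definition derivs (F Fx1 Fx2 Fs Ft : R * R -> R -> R -> R) : Prop :=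
  forall x s t,
    is_derive (fun u => F (u, snd x) s t) (fst x) (Fx1 x s t) /\
    is_derive (fun u => F (fst x, u) s t) (snd x) (Fx2 x s t) /\
    is_derive (fun u => F x u t) s (Fs x s t) /\
    is_derive (fun u => F x s u) t (Ft x s t).

Definition bounded_on (a : R * R) s0 t0 rho M (Fx1 Fx2 Fs Ft : R * R -> R -> R -> R) : Prop :=
  forall x s t, cube a s0 t0 rho x s t ->
    Rabs (Fx1 x s t) <= M /\ Rabs (Fx2 x s t) <= M /\ Rabs (Fs x s t) <= M /\ Rabs (Ft x s t) <= M.

Lemma lip_cube F Fx1 Fx2 Fs Ft a s0 t0 rho M x s t x' s' t' :
  derivs F Fx1 Fx2 Fs Ft -> bounded_on a s0 t0 rho M Fx1 Fx2 Fs Ft ->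
  cube a s0 t0 rho x s t -> cube a s0 t0 rho x' s' t' ->
  Rabs (F x s t - F x' s' t') <=
    M * (Rabs (fst x - fst x') + Rabs (snd x - snd x') + Rabs (s - s') + Rabs (t - t')).
Proof.
  intros HD HB [C1 [C2 [C3 C4]]] [C1' [C2' [C3' C4']]].
  destruct x as [x1 x2]; destruct x' as [x1' x2']; simpl in *.
  assert (E1 : Rabs (F (x1, x2) s t - F (x1', x2) s t) <= M * Rabs (x1 - x1')).
  { apply (mvt_bound (fun u => F (u, x2) s t) (fun u => Fx1 (u, x2) s t) x1' x1).
    intro w. exact (proj1 (HD (w, x2) s t)).
    intros w Hw. refine (proj1 (HB (w, x2) s t _)). repeat split; simpl; auto. exact (between_in x1' x1 w _ _ C1' C1 Hw). }
  assert (E2 : Rabs (F (x1', x2) s t - F (x1', x2') s t) <= M * Rabs (x2 - x2')).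
  { apply (mvt_bound (fun u => F (x1', u) s t) (fun u => Fx2 (x1', u) s t) x2' x2).
    intro w. exact (proj1 (proj2 (HD (x1', w) s t))).
    intros w Hw. refine (proj1 (proj2 (HB (x1', w) s t _))). repeat split; simpl; auto. exact (between_in x2' x2 w _ _ C2' C2 Hw). }
  assert (E3 : Rabs (F (x1', x2') s t - F (x1', x2') s' t) <= M * Rabs (s - s')).
  { apply (mvt_bound (fun u => F (x1', x2') u t) (fun u => Fs (x1', x2') u t) s' s).
    intro w. exact (proj1 (proj2 (proj2 (HD (x1', x2') w t)))).
    intros w Hw. refine (proj1 (proj2 (proj2 (HB (x1', x2') w t _)))). repeat split; simpl; auto. exact (between_in s' s w _ _ C3' C3 Hw). }
  assert (E4 : Rabs (F (x1', x2') s' t - F (x1', x2') s' t') <= M * Rabs (t - t')).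
  { apply (mvt_bound (fun u => F (x1', x2') s' u) (fun u => Ft (x1', x2') s' u) t' t).
    intro w. exact (proj2 (proj2 (proj2 (HD (x1', x2') s' w)))).
    intros w Hw. refine (proj2 (proj2 (proj2 (HB (x1', x2') s' w _)))). repeat split; simpl; auto. exact (between_in t' t w _ _ C4' C4 Hw). }
  replace (F (x1, x2) s t - F (x1', x2') s' t') with
    ((F (x1, x2) s t - F (x1', x2) s t) + (F (x1', x2) s t - F (x1', x2') s t)
     + (F (x1', x2') s t - F (x1', x2') s' t) + (F (x1', x2') s' t - F (x1', x2') s' t')) by ring.
  eapply Rle_trans. apply Rabs_triang. eapply Rle_trans. apply Rplus_le_compat_r. apply Rabs_triang.
  eapply Rle_trans. apply Rplus_le_compat_r, Rplus_le_compat_r. apply Rabs_triang.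
  lra.
Qed.

Definition clamp (al be u : R) : R := Rmax al (Rmin be u).

Lemma clamp_in al be u : al <= be -> al <= clamp al be u <= be.
Proof. intro H. unfold clamp, Rmax, Rmin. repeat destruct Rle_dec; lra. Qed.

Lemma clamp_id al be u : al <= u <= be -> clamp al be u = u.
Proof. intro H. unfold clamp, Rmax, Rmin. repeat destruct Rle_dec; lra. Qed.

Lemma clamp_lip al be u v : al <= be -> Rabs (clamp al be u - clamp al be v) <= Rabs (u - v).
Proof. intro H. unfold clamp, Rmax, Rmin. repeat destruct Rle_dec; split_Rabs; lra. Qed.

Lemma IVT_lip (f : R -> R) al be K : al <= be -> 0 <= K ->
  (forall u v, al <= u <= be -> al <= v <= be -> Rabs (f u - f v) <= K * Rabs (u - v)) ->
  f al <= 0 -> 0 <= f be -> exists z, al <= z <= be /\ f z = 0.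
Proof.
  intros Hab HK Hl Ha Hb.
  set (g := fun u => f (clamp al be u)).
  assert (Hg : continuity g).
  { intro x. apply continuity_pt_filterlim. apply filterlim_locally. intro eps.
    assert (Hp : 0 < eps / (K + 1)) by (apply Rdiv_lt_0_compat; [apply cond_pos|lra]).
    exists (mkposreal _ Hp). intros u Hu.
    change (Rabs (u - x) < eps / (K + 1)) in Hu.
    change (Rabs (g u - g x) < eps). unfold g.
    eapply Rle_lt_trans. apply Hl; apply clamp_in; auto.
    eapply Rle_lt_trans. apply Rmult_le_compat_l; auto. apply clamp_lip; auto.
    assert (Rabs (u - x) * (K + 1) < eps).
    { assert (Rabs (u - x) * (K + 1) < eps / (K + 1) * (K + 1)) by (apply Rmult_lt_compat_r; lra).
      replace (eps / (K + 1) * (K + 1)) with (pos eps) in H by (field; lra). exact H. }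
    pose proof (Rabs_pos (u - x)). nra. }
  destruct (IVT_gen g al be 0 Hg) as [z [Hz Ez]].
  { unfold g. rewrite !clamp_id by lra. unfold Rmin, Rmax; destruct Rle_dec; lra. }
  rewrite Rmin_left, Rmax_right in Hz by lra.
  exists z. split; auto. unfold g in Ez. rewrite clamp_id in Ez by lra. exact Ez.
Qed.

Lemma lower_abs F Fx1 Fx2 Fs Ft a s0 t0 rho m1 x t s s' :
  derivs F Fx1 Fx2 Fs Ft -> (forall x s t, cube a s0 t0 rho x s t -> m1 <= Fs x s t) ->
  cube a s0 t0 rho x s t -> cube a s0 t0 rho x s' t ->
  m1 * Rabs (s - s') <= Rabs (F x s t - F x s' t).
Proof.
  intros HD Hm [C1 [C2 [C3 C4]]] [_ [_ [C3' _]]].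
  assert (Hd : forall w, is_derive (fun u => F x u t) w (Fs x w t)) by (intro w; apply (HD x w t)).
  destruct (Rle_dec s s').
  - pose proof (mvt_lower (fun u => F x u t) (fun u => Fs x u t) s s' m1 Hd).
    assert (m1 * (s' - s) <= F x s' t - F x s t).
    { apply H; auto. intros w Hw. apply Hm. repeat split; auto. exact (between_in s s' w s0 rho C3 C3' Hw). }
    rewrite Rabs_minus_sym, (Rabs_minus_sym (F x s t)).
    rewrite (Rabs_pos_eq (s' - s)) by lra.
    eapply Rle_trans. apply H0. apply Rle_abs.
  - pose proof (mvt_lower (fun u => F x u t) (fun u => Fs x u t) s' s m1 Hd).
    assert (m1 * (s - s') <= F x s t - F x s' t).
    { apply H. intros w Hw. apply Hm. repeat split; auto. exact (between_in s' s w s0 rho C3' C3 Hw). lra. }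
    rewrite (Rabs_pos_eq (s - s')) by lra.
    eapply Rle_trans. apply H0. apply Rle_abs.
Qed.

Lemma abs_le_inv A B C : Rabs (A - B) <= C -> B - C <= A <= B + C.
Proof. split_Rabs; lra. Qed.

Definition dom2 (a : R * R) (t0 r : R) (x : R * R) (t : R) : Prop :=
  Rabs (fst x - fst a) <= r /\ Rabs (snd x - snd a) <= r /\ Rabs (t - t0) <= r.

Lemma dom2_cube a s0 t0 r rho x s t : r <= rho -> dom2 a t0 r x t -> Rabs (s - s0) <= rho ->
  cube a s0 t0 rho x s t.
Proof. intros H [A [B C]] D. repeat split; auto; lra. Qed.

Lemma Rabs_diag x : Rabs (x - x) = 0.
Proof. rewrite Rminus_diag; apply Rabs_R0. Qed.

Lemma step1 F Fx1 Fx2 Fs Ft a s0 t0 rho M m1 :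
  derivs F Fx1 Fx2 Fs Ft -> bounded_on a s0 t0 rho M Fx1 Fx2 Fs Ft ->
  0 < rho -> 0 < M -> 0 < m1 ->
  (forall x s t, cube a s0 t0 rho x s t -> m1 <= Fs x s t) -> F a s0 t0 = 0 ->
  exists r1 (P : R * R -> R -> R), 0 < r1 /\ r1 <= rho /\
   (forall x t, dom2 a t0 r1 x t -> Rabs (P x t - s0) <= rho /\ F x (P x t) t = 0) /\
   (forall x t s, dom2 a t0 r1 x t -> Rabs (s - s0) <= rho -> F x s t = 0 -> s = P x t) /\
   (forall x t x' t', dom2 a t0 r1 x t -> dom2 a t0 r1 x' t' ->
      Rabs (P x t - P x' t') <=
        M / m1 * (Rabs (fst x - fst x') + Rabs (snd x - snd x') + Rabs (t - t'))).
Proof.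
  intros HD HB Hrho HM Hm1 HFs HF0.
  set (r1 := Rmin rho (m1 * rho / (6 * M))).
  assert (Hq : 0 < m1 * rho / (6 * M)) by (apply Rdiv_lt_0_compat; nra).
  assert (Hr1 : 0 < r1) by (unfold r1, Rmin; destruct Rle_dec; lra).
  assert (Hr1a : r1 <= rho) by apply Rmin_l.
  assert (Hr1b : r1 <= m1 * rho / (6 * M)) by apply Rmin_r.
  assert (HMr : 3 * M * r1 <= m1 * rho / 2).
  { replace (m1 * rho / 2) with (3 * M * (m1 * rho / (6 * M))) by (field; lra).
    apply Rmult_le_compat_l; lra. }
  assert (Ha0 : cube a s0 t0 rho a s0 t0) by (repeat split; rewrite Rabs_diag; lra).
  assert (Hup : m1 * rho <= F a (s0 + rho) t0).
  { rewrite <- (Rminus_0_r (F a (s0 + rho) t0)), <- HF0.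
    replace (m1 * rho) with (m1 * (s0 + rho - s0)) by ring.
    apply (mvt_lower (fun u => F a u t0) (fun u => Fs a u t0)).
    intro w; apply (HD a w t0).
    intros w Hw. apply HFs. repeat split; try (rewrite Rabs_diag; lra).
    apply (between_in s0 (s0 + rho) w s0 rho); auto. rewrite Rabs_diag; lra.
    replace (s0 + rho - s0) with rho by ring. rewrite Rabs_pos_eq; lra. lra. }
  assert (Hlo : F a (s0 - rho) t0 <= - (m1 * rho)).
  { assert (m1 * (s0 - (s0 - rho)) <= F a s0 t0 - F a (s0 - rho) t0).
    { apply (mvt_lower (fun u => F a u t0) (fun u => Fs a u t0)).
      intro w; apply (HD a w t0).
      intros w Hw. apply HFs. repeat split; try (rewrite Rabs_diag; lra).
      apply (between_in (s0 - rho) s0 w s0 rho); auto.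
      replace (s0 - rho - s0) with (- rho) by ring. rewrite Rabs_Ropp, Rabs_pos_eq; lra.
      rewrite Rabs_diag; lra. lra. }
    lra. }
  assert (Hs1 : Rabs (s0 + rho - s0) <= rho) by (replace (s0 + rho - s0) with rho by ring; rewrite Rabs_pos_eq; lra).
  assert (Hs2 : Rabs (s0 - rho - s0) <= rho) by (replace (s0 - rho - s0) with (- rho) by ring; rewrite Rabs_Ropp, Rabs_pos_eq; lra).
  assert (Hex : forall x t, exists z, dom2 a t0 r1 x t -> Rabs (z - s0) <= rho /\ F x z t = 0).
  { intros x t. destruct (classic (dom2 a t0 r1 x t)) as [Hd|Hd]; [|exists 0; tauto].
    pose proof Hd as [D1 [D2 D3]].
    assert (Ht1 : F x (s0 + rho) t >= m1 * rho / 2).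
    { pose proof (lip_cube F Fx1 Fx2 Fs Ft a s0 t0 rho M x (s0 + rho) t a (s0 + rho) t0 HD HB
        (dom2_cube _ _ _ _ _ _ _ _ Hr1a Hd Hs1) (dom2_cube _ _ _ _ _ _ _ _ Hr1a
          (conj (Rle_trans _ _ _ (Req_le _ _ (Rabs_diag _)) (Rlt_le _ _ Hr1))
            (conj (Rle_trans _ _ _ (Req_le _ _ (Rabs_diag _)) (Rlt_le _ _ Hr1))
              (Rle_trans _ _ _ (Req_le _ _ (Rabs_diag _)) (Rlt_le _ _ Hr1)))) Hs1)) as L.
      apply abs_le_inv in L. rewrite Rabs_diag in L.
      assert (M * (Rabs (fst x - fst a) + Rabs (snd x - snd a) + 0 + Rabs (t - t0)) <= 3 * M * r1) by nra.
      lra. }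
    assert (Ht2 : F x (s0 - rho) t <= - (m1 * rho / 2)).
    { pose proof (lip_cube F Fx1 Fx2 Fs Ft a s0 t0 rho M x (s0 - rho) t a (s0 - rho) t0 HD HB
        (dom2_cube _ _ _ _ _ _ _ _ Hr1a Hd Hs2) (dom2_cube _ _ _ _ _ _ _ _ Hr1a
          (conj (Rle_trans _ _ _ (Req_le _ _ (Rabs_diag _)) (Rlt_le _ _ Hr1))
            (conj (Rle_trans _ _ _ (Req_le _ _ (Rabs_diag _)) (Rlt_le _ _ Hr1))
              (Rle_trans _ _ _ (Req_le _ _ (Rabs_diag _)) (Rlt_le _ _ Hr1)))) Hs2)) as L.
      apply abs_le_inv in L. rewrite Rabs_diag in L.
      assert (M * (Rabs (fst x - fst a) + Rabs (snd x - snd a) + 0 + Rabs (t - t0)) <= 3 * M * r1) by nra.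
      lra. }
    assert (0 < m1 * rho) by nra.
    destruct (IVT_lip (fun s => F x s t) (s0 - rho) (s0 + rho) M) as [z [Hz Fz]]; try lra.
    2:{ exists z. intros _. split; auto. apply Rabs_le; lra. }
    { intros u v Hu Hv.
      assert (Cu : cube a s0 t0 rho x u t) by (apply dom2_cube with r1; auto; apply Rabs_le; lra).
      assert (Cv : cube a s0 t0 rho x v t) by (apply dom2_cube with r1; auto; apply Rabs_le; lra).
      pose proof (lip_cube F Fx1 Fx2 Fs Ft a s0 t0 rho M x u t x v t HD HB Cu Cv) as L.
      rewrite !Rabs_diag in L. lra. } }
  set (P := fun x t => proj1_sig (constructive_indefinite_description _ (Hex x t))).
  assert (HP : forall x t, dom2 a t0 r1 x t -> Rabs (P x t - s0) <= rho /\ F x (P x t) t = 0).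
  { intros x t. exact (proj2_sig (constructive_indefinite_description _ (Hex x t))). }
  exists r1, P. split; auto. split; auto. split; auto. split.
  - intros x t s Hd Hs Fs0. destruct (HP x t Hd) as [HP1 HP2].
    pose proof (lower_abs F Fx1 Fx2 Fs Ft a s0 t0 rho m1 x t s (P x t) HD HFs
                  (dom2_cube _ _ _ _ _ _ _ _ Hr1a Hd Hs) (dom2_cube _ _ _ _ _ _ _ _ Hr1a Hd HP1)) as L.
    rewrite Fs0, HP2, Rminus_0_r, Rabs_R0 in L.
    assert (Rabs (s - P x t) <= 0) by nra.
    pose proof (Rabs_pos (s - P x t)).
    assert (Rabs (s - P x t) = 0) by lra.
    apply Rabs_eq_0 in H1. lra.
  - intros x t x' t' Hd Hd'. destruct (HP x t Hd) as [HP1 HP2]. destruct (HP x' t' Hd') as [HP1' HP2'].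
    pose proof (lower_abs F Fx1 Fx2 Fs Ft a s0 t0 rho m1 x t (P x t) (P x' t') HD HFs
                  (dom2_cube _ _ _ _ _ _ _ _ Hr1a Hd HP1) (dom2_cube _ _ _ _ _ _ _ _ Hr1a Hd HP1')) as L.
    pose proof (lip_cube F Fx1 Fx2 Fs Ft a s0 t0 rho M x (P x' t') t x' (P x' t') t' HD HB
                  (dom2_cube _ _ _ _ _ _ _ _ Hr1a Hd HP1') (dom2_cube _ _ _ _ _ _ _ _ Hr1a Hd' HP1')) as L2.
    rewrite HP2, HP2' in *. rewrite Rabs_diag in L2.
    rewrite Rminus_0_l, Rabs_Ropp in L. rewrite Rminus_0_r in L2.
    apply (Rmult_le_reg_l m1); auto.
    replace (m1 * (M / m1 * (Rabs (fst x - fst x') + Rabs (snd x - snd x') + Rabs (t - t'))))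
      with (M * (Rabs (fst x - fst x') + Rabs (snd x - snd x') + 0 + Rabs (t - t'))) by (field; lra).
    lra.
Qed.

Definition bracket_cond a s0 t0 rho m2 (Fs Ft Gs Gt : R * R -> R -> R -> R) : Prop :=
  forall x s1 t1 s2 t2 s3 t3 s4 t4,
    cube a s0 t0 rho x s1 t1 -> cube a s0 t0 rho x s2 t2 ->
    cube a s0 t0 rho x s3 t3 -> cube a s0 t0 rho x s4 t4 ->
    m2 <= Fs x s1 t1 * Gt x s4 t4 - Gs x s3 t3 * Ft x s2 t2.

Definition box1 (a : R * R) r (x : R * R) : Prop :=
  Rabs (fst x - fst a) <= r /\ Rabs (snd x - snd a) <= r.

Lemma step2 F Fx1 Fx2 Fs Ft G Gx1 Gx2 Gs Gt a s0 t0 rho M m1 m2 r1 (P : R * R -> R -> R) :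
  derivs F Fx1 Fx2 Fs Ft -> bounded_on a s0 t0 rho M Fx1 Fx2 Fs Ft ->
  derivs G Gx1 Gx2 Gs Gt -> bounded_on a s0 t0 rho M Gx1 Gx2 Gs Gt ->
  0 < rho -> 0 < M -> 0 < m1 -> 0 < m2 ->
  (forall x s t, cube a s0 t0 rho x s t -> m1 <= Fs x s t) ->
  bracket_cond a s0 t0 rho m2 Fs Ft Gs Gt ->
  F a s0 t0 = 0 -> G a s0 t0 = 0 ->
  0 < r1 -> r1 <= rho ->
  (forall x t, dom2 a t0 r1 x t -> Rabs (P x t - s0) <= rho /\ F x (P x t) t = 0) ->
  (forall x t s, dom2 a t0 r1 x t -> Rabs (s - s0) <= rho -> F x s t = 0 -> s = P x t) ->
  (forall x t x' t', dom2 a t0 r1 x t -> dom2 a t0 r1 x' t' ->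
      Rabs (P x t - P x' t') <=
        M / m1 * (Rabs (fst x - fst x') + Rabs (snd x - snd x') + Rabs (t - t'))) ->
  exists r2 (Q : R * R -> R) L, 0 < r2 /\ r2 <= r1 /\ 0 <= L /\
    (forall x, box1 a r2 x -> Rabs (Q x - t0) <= r1 /\ G x (P x (Q x)) (Q x) = 0) /\
    (forall x x', box1 a r2 x -> box1 a r2 x' ->
       Rabs (Q x - Q x') <= L * (Rabs (fst x - fst x') + Rabs (snd x - snd x'))).
Proof.
  intros HDF HBF HDG HBG Hrho HM Hm1 Hm2 HFs Hbr HF0 HG0 Hr1 Hr1r HP HPu HPl.
  set (Phi := fun x t => G x (P x t) t).
  assert (Hdom : forall x t, box1 a r1 x -> Rabs (t - t0) <= r1 -> dom2 a t0 r1 x t).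
  { intros x t [A B] C; repeat split; auto. }
  set (m3 := m2 / M).
  assert (Hm3 : 0 < m3) by (apply Rdiv_lt_0_compat; auto).
  assert (Hmono : forall x t t', box1 a r1 x -> Rabs (t - t0) <= r1 -> Rabs (t' - t0) <= r1 ->
            t <= t' -> m3 * (t' - t) <= Phi x t' - Phi x t).
  { intros x t t' Hx Ht Ht' Htt.
    destruct (HP x t (Hdom x t Hx Ht)) as [Hp Fp].
    destruct (HP x t' (Hdom x t' Hx Ht')) as [Hp' Fp'].
    set (p := P x t) in *. set (p' := P x t') in *.
    assert (Ct : Rabs (t - t0) <= rho) by lra. assert (Ct' : Rabs (t' - t0) <= rho) by lra.
    destruct Hx as [X1 X2].
    assert (X1' : Rabs (fst x - fst a) <= rho) by lra. assert (X2' : Rabs (snd x - snd a) <= rho) by lra.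
    destruct (mvt_exact (fun u => F x u t') (fun u => Fs x u t') p p') as [s1 [Hs1 E1]].
    { intro w; apply (HDF x w t'). }
    destruct (mvt_exact (fun u => F x p u) (fun u => Ft x p u) t t') as [t2 [Ht2 E2]].
    { intro w; apply (HDF x p w). }
    destruct (mvt_exact (fun u => G x u t') (fun u => Gs x u t') p p') as [s3 [Hs3 E3]].
    { intro w; apply (HDG x w t'). }
    destruct (mvt_exact (fun u => G x p u) (fun u => Gt x p u) t t') as [t4 [Ht4 E4']].
    { intro w; apply (HDG x p w). }
    assert (C1 : cube a s0 t0 rho x s1 t') by (repeat split; auto; exact (between_in p p' s1 s0 rho Hp Hp' Hs1)).
    assert (C2 : cube a s0 t0 rho x p t2) by (repeat split; auto; exact (between_in t t' t2 t0 rho Ct Ct' Ht2)).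
    assert (C3 : cube a s0 t0 rho x s3 t') by (repeat split; auto; exact (between_in p p' s3 s0 rho Hp Hp' Hs3)).
    assert (C4 : cube a s0 t0 rho x p t4) by (repeat split; auto; exact (between_in t t' t4 t0 rho Ct Ct' Ht4)).
    pose proof (Hbr x s1 t' p t2 s3 t' p t4 C1 C2 C3 C4) as Hb.
    pose proof (HFs x s1 t' C1) as HA.
    pose proof (proj1 (proj2 (proj2 (HBF x s1 t' C1)))) as HAM. rewrite <- (Rminus_0_r (Fs x s1 t')) in HAM. apply abs_le_inv in HAM.
    set (A1 := Fs x s1 t') in *. set (B2 := Ft x p t2) in *.
    set (C3' := Gs x s3 t') in *. set (E4 := Gt x p t4) in *.
    assert (Z : 0 = A1 * (p' - p) + B2 * (t' - t)).
    { rewrite <- E1, <- E2. rewrite Fp, Fp'. ring. }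
    assert (D : Phi x t' - Phi x t = C3' * (p' - p) + E4 * (t' - t)).
    { unfold Phi. fold p p'. rewrite <- E3, <- E4'. ring. }
    assert (A1D : A1 * (Phi x t' - Phi x t) = (t' - t) * (A1 * E4 - C3' * B2)).
    { rewrite D. replace (A1 * (C3' * (p' - p) + E4 * (t' - t))) with
        (C3' * (A1 * (p' - p) + B2 * (t' - t)) + (t' - t) * (A1 * E4 - C3' * B2)) by ring.
      rewrite <- Z. ring. }
    assert (HH : (t' - t) * m2 <= A1 * (Phi x t' - Phi x t)).
    { rewrite A1D. apply Rmult_le_compat_l; lra. }
    unfold m3. apply (Rmult_le_reg_l M); auto.
    replace (M * (m2 / M * (t' - t))) with ((t' - t) * m2) by (field; lra).
    destruct (Rle_dec 0 (Phi x t' - Phi x t)).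
    - nra.
    - assert (0 <= (t' - t) * m2) by (apply Rmult_le_pos; lra). nra. }
  assert (Hmono_abs : forall x t t', box1 a r1 x -> Rabs (t - t0) <= r1 -> Rabs (t' - t0) <= r1 ->
            m3 * Rabs (t - t') <= Rabs (Phi x t - Phi x t')).
  { intros x t t' Hx Ht Ht'. destruct (Rle_dec t t').
    - pose proof (Hmono x t t' Hx Ht Ht' r).
      rewrite Rabs_minus_sym, (Rabs_minus_sym (Phi x t)), Rabs_pos_eq by lra.
      eapply Rle_trans; [apply H|apply Rle_abs].
    - pose proof (Hmono x t' t Hx Ht' Ht ltac:(lra)).
      rewrite Rabs_pos_eq by lra.
      eapply Rle_trans; [apply H|apply Rle_abs]. }
  set (Kt := M * (M / m1 + 1)).
  assert (HKt : 0 <= Kt) by (unfold Kt; apply Rmult_le_pos; [lra|]; assert (0 < M / m1) by (apply Rdiv_lt_0_compat; auto); lra).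
  assert (HLt : forall x t t', box1 a r1 x -> Rabs (t - t0) <= r1 -> Rabs (t' - t0) <= r1 ->
            Rabs (Phi x t - Phi x t') <= Kt * Rabs (t - t')).
  { intros x t t' Hx Ht Ht'.
    destruct (HP x t (Hdom x t Hx Ht)) as [Hp _].
    destruct (HP x t' (Hdom x t' Hx Ht')) as [Hp' _].
    pose proof (lip_cube G Gx1 Gx2 Gs Gt a s0 t0 rho M x (P x t) t x (P x t') t' HDG HBG
       (dom2_cube _ _ _ _ _ _ _ _ Hr1r (Hdom x t Hx Ht) Hp)
       (dom2_cube _ _ _ _ _ _ _ _ Hr1r (Hdom x t' Hx Ht') Hp')) as L.
    pose proof (HPl x t x t' (Hdom x t Hx Ht) (Hdom x t' Hx Ht')) as L2.
    rewrite !Rabs_diag in L, L2. unfold Phi. eapply Rle_trans. apply L.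
    unfold Kt. nra. }
  set (Kx := M * (1 + M / m1)).
  assert (HKx : 0 < Kx) by (unfold Kx; apply Rmult_lt_0_compat; [lra|]; assert (0 < M / m1) by (apply Rdiv_lt_0_compat; auto); lra).
  assert (HLx : forall x x' t, box1 a r1 x -> box1 a r1 x' -> Rabs (t - t0) <= r1 ->
            Rabs (Phi x t - Phi x' t) <= Kx * (Rabs (fst x - fst x') + Rabs (snd x - snd x'))).
  { intros x x' t Hx Hx' Ht.
    destruct (HP x t (Hdom x t Hx Ht)) as [Hp _].
    destruct (HP x' t (Hdom x' t Hx' Ht)) as [Hp' _].
    pose proof (lip_cube G Gx1 Gx2 Gs Gt a s0 t0 rho M x (P x t) t x' (P x' t) t HDG HBG
       (dom2_cube _ _ _ _ _ _ _ _ Hr1r (Hdom x t Hx Ht) Hp)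
       (dom2_cube _ _ _ _ _ _ _ _ Hr1r (Hdom x' t Hx' Ht) Hp')) as L.
    pose proof (HPl x t x' t (Hdom x t Hx Ht) (Hdom x' t Hx' Ht)) as L2.
    rewrite !Rabs_diag in L, L2. unfold Phi. eapply Rle_trans. apply L.
    unfold Kx. pose proof (Rabs_pos (fst x - fst x')). pose proof (Rabs_pos (snd x - snd x')).
    assert (0 < M / m1) by (apply Rdiv_lt_0_compat; auto). nra. }
  assert (Ha1 : box1 a r1 a) by (split; rewrite Rabs_diag; lra).
  assert (Ht00 : Rabs (t0 - t0) <= r1) by (rewrite Rabs_diag; lra).
  assert (Htp : Rabs (t0 + r1 - t0) <= r1) by (replace (t0 + r1 - t0) with r1 by ring; rewrite Rabs_pos_eq; lra).
  assert (Htm : Rabs (t0 - r1 - t0) <= r1) by (replace (t0 - r1 - t0) with (- r1) by ring; rewrite Rabs_Ropp, Rabs_pos_eq; lra).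
  assert (HPa : P a t0 = s0).
  { symmetry. apply HPu; auto. rewrite Rabs_diag; lra. }
  assert (HPhi0 : Phi a t0 = 0) by (unfold Phi; rewrite HPa; auto).
  assert (Hup : m3 * r1 <= Phi a (t0 + r1)).
  { pose proof (Hmono a t0 (t0 + r1) Ha1 Ht00 Htp ltac:(lra)). rewrite HPhi0 in H.
    replace (t0 + r1 - t0) with r1 in H by ring. lra. }
  assert (Hlo : Phi a (t0 - r1) <= - (m3 * r1)).
  { pose proof (Hmono a (t0 - r1) t0 Ha1 Htm Ht00 ltac:(lra)). rewrite HPhi0 in H.
    replace (t0 - (t0 - r1)) with r1 in H by ring. lra. }
  set (r2 := Rmin r1 (m3 * r1 / (4 * Kx))).
  assert (Hq : 0 < m3 * r1 / (4 * Kx)) by (apply Rdiv_lt_0_compat; nra).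
  assert (Hr2 : 0 < r2) by (unfold r2, Rmin; destruct Rle_dec; lra).
  assert (Hr2a : r2 <= r1) by apply Rmin_l.
  assert (Hr2b : r2 <= m3 * r1 / (4 * Kx)) by apply Rmin_r.
  assert (HKr : 2 * Kx * r2 <= m3 * r1 / 2).
  { replace (m3 * r1 / 2) with (2 * Kx * (m3 * r1 / (4 * Kx))) by (field; lra).
    apply Rmult_le_compat_l; lra. }
  assert (Hb12 : forall x, box1 a r2 x -> box1 a r1 x) by (intros x [A B]; split; lra).
  assert (Hex : forall x, exists z, box1 a r2 x -> Rabs (z - t0) <= r1 /\ Phi x z = 0).
  { intro x. destruct (classic (box1 a r2 x)) as [Hx|Hx]; [|exists 0; tauto].
    assert (Hx1 := Hb12 x Hx). pose proof Hx as [X1 X2].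
    assert (E1 : Rabs (Phi x (t0 + r1) - Phi a (t0 + r1)) <= Kx * (Rabs (fst x - fst a) + Rabs (snd x - snd a)))
      by (apply HLx; auto).
    assert (E2 : Rabs (Phi x (t0 - r1) - Phi a (t0 - r1)) <= Kx * (Rabs (fst x - fst a) + Rabs (snd x - snd a)))
      by (apply HLx; auto).
    apply abs_le_inv in E1. apply abs_le_inv in E2.
    assert (Kx * (Rabs (fst x - fst a) + Rabs (snd x - snd a)) <= 2 * Kx * r2) by nra.
    assert (0 < m3 * r1) by nra.
    destruct (IVT_lip (fun t => Phi x t) (t0 - r1) (t0 + r1) Kt) as [z [Hz Fz]]; try lra.
    2:{ exists z. intros _. split; auto. apply Rabs_le; lra. }
    intros u v Hu Hv. apply HLt; auto; apply Rabs_le; lra. }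
  set (Q := fun x => proj1_sig (constructive_indefinite_description _ (Hex x))).
  assert (HQ : forall x, box1 a r2 x -> Rabs (Q x - t0) <= r1 /\ Phi x (Q x) = 0).
  { intro x. exact (proj2_sig (constructive_indefinite_description _ (Hex x))). }
  exists r2, Q, (Kx / m3). split; auto. split; auto. split.
  { apply Rlt_le, Rdiv_lt_0_compat; auto. }
  split; auto.
  intros x x' Hx Hx'. destruct (HQ x Hx) as [Q1 Q2]. destruct (HQ x' Hx') as [Q1' Q2'].
  pose proof (Hmono_abs x (Q x) (Q x') (Hb12 x Hx) Q1 Q1') as L1.
  pose proof (HLx x x' (Q x') (Hb12 x Hx) (Hb12 x' Hx') Q1') as L2.
  rewrite Q2, Rminus_0_l, Rabs_Ropp in L1. rewrite Q2', Rminus_0_r in L2.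
  apply (Rmult_le_reg_l m3); auto.
  replace (m3 * (Kx / m3 * (Rabs (fst x - fst x') + Rabs (snd x - snd x'))))
    with (Kx * (Rabs (fst x - fst x') + Rabs (snd x - snd x'))) by (field; lra).
  lra.
Qed.

From Stdlib Require Import List. Import ListNotations.
Open Scope R_scope.

Lemma ift_core F Fx1 Fx2 Fs Ft G Gx1 Gx2 Gs Gt a s0 t0 rho M m1 m2 :
  derivs F Fx1 Fx2 Fs Ft -> bounded_on a s0 t0 rho M Fx1 Fx2 Fs Ft ->
  derivs G Gx1 Gx2 Gs Gt -> bounded_on a s0 t0 rho M Gx1 Gx2 Gs Gt ->
  0 < rho -> 0 < M -> 0 < m1 -> 0 < m2 ->
  (forall x s t, cube a s0 t0 rho x s t -> m1 <= Fs x s t) ->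
  bracket_cond a s0 t0 rho m2 Fs Ft Gs Gt ->
  F a s0 t0 = 0 -> G a s0 t0 = 0 ->
  exists r ds dt (S Q : R * R -> R) L, 0 < r /\ 0 < ds /\ 0 < dt /\ 0 <= L /\
    (forall x, box1 a r x -> Rabs (S x - s0) <= ds /\ Rabs (Q x - t0) <= dt /\
        F x (S x) (Q x) = 0 /\ G x (S x) (Q x) = 0) /\
    (forall x x', box1 a r x -> box1 a r x' ->
       Rabs (S x - S x') <= L * (Rabs (fst x - fst x') + Rabs (snd x - snd x')) /\
       Rabs (Q x - Q x') <= L * (Rabs (fst x - fst x') + Rabs (snd x - snd x'))).
Proof.
  intros HDF HBF HDG HBG Hrho HM Hm1 Hm2 HFs Hbr HF0 HG0.
  destruct (step1 F Fx1 Fx2 Fs Ft a s0 t0 rho M m1 HDF HBF Hrho HM Hm1 HFs HF0)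
    as [r1 [P [Hr1 [Hr1r [HP [HPu HPl]]]]]].
  destruct (step2 F Fx1 Fx2 Fs Ft G Gx1 Gx2 Gs Gt a s0 t0 rho M m1 m2 r1 P HDF HBF HDG HBG
              Hrho HM Hm1 Hm2 HFs Hbr HF0 HG0 Hr1 Hr1r HP HPu HPl)
    as [r2 [Q [LQ [Hr2 [Hr2r [HLQ [HQ HQl]]]]]]].
  assert (HMm : 0 < M / m1) by (apply Rdiv_lt_0_compat; auto).
  exists r2, rho, r1, (fun x => P x (Q x)), Q, (LQ + M / m1 * (1 + LQ)).
  assert (Hd : forall x, box1 a r2 x -> dom2 a t0 r1 x (Q x)).
  { intros x [A B]. destruct (HQ x (conj A B)) as [C _]. repeat split; auto; lra. }
  split; auto. split; auto. split; auto. split.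
  { pose proof (Rmult_le_pos _ _ (Rlt_le _ _ HMm) (Rplus_le_le_0_compat 1 LQ ltac:(lra) HLQ)). lra. }
  split.
  - intros x Hx. destruct (HP x (Q x) (Hd x Hx)) as [A B]. destruct (HQ x Hx) as [C D].
    repeat split; auto.
  - intros x x' Hx Hx'. pose proof (HQl x x' Hx Hx') as L1.
    pose proof (HPl x (Q x) x' (Q x') (Hd x Hx) (Hd x' Hx')) as L2.
    set (d := Rabs (fst x - fst x') + Rabs (snd x - snd x')) in *.
    assert (0 <= d) by (unfold d; pose proof (Rabs_pos (fst x - fst x')); pose proof (Rabs_pos (snd x - snd x')); lra).
    assert (0 <= M / m1 * (1 + LQ) * d) by (apply Rmult_le_pos; [apply Rmult_le_pos; lra| lra]).
    assert (0 <= LQ * d) by (apply Rmult_le_pos; lra).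
    split.
    + eapply Rle_trans. apply L2.
      replace ((LQ + M / m1 * (1 + LQ)) * d) with (LQ * d + M / m1 * (d + LQ * d)) by ring.
      assert (M / m1 * (d + Rabs (Q x - Q x')) <= M / m1 * (d + LQ * d)).
      { apply Rmult_le_compat_l; lra. }
      unfold d in *. lra.
    + replace ((LQ + M / m1 * (1 + LQ)) * d) with (LQ * d + M / m1 * (1 + LQ) * d) by ring. lra.
Qed.

Definition cont_base a s0 t0 (D : R * R -> R -> R -> R) : Prop :=
  forall eps, 0 < eps -> exists del, 0 < del /\
    forall x s t, cube a s0 t0 del x s t -> Rabs (D x s t - D a s0 t0) < eps.

Lemma cube_mono a s0 t0 d d' x s t : d <= d' -> cube a s0 t0 d x s t -> cube a s0 t0 d' x s t.
Proof. intros H [A [B [C D]]]; repeat split; lra. Qed.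

Lemma abs_le0 x y : Rabs x <= y -> - y <= x <= y.
Proof. split_Rabs; lra. Qed.

Lemma bracket_est a1 A e4 E c3 C b2 B eta :
  0 <= eta <= 1 -> 0 <= A ->
  Rabs (a1 - A) <= eta -> Rabs (e4 - E) <= eta -> Rabs (c3 - C) <= eta -> Rabs (b2 - B) <= eta ->
  (A * E - C * B) - eta * (2 + A + Rabs B + Rabs C + Rabs E) <= a1 * e4 - c3 * b2.
Proof.
  intros He HA H1 H4 H3 H2.
  assert (Ee4 : Rabs e4 <= Rabs E + 1).
  { pose proof (Rabs_triang_inv e4 E). lra. }
  assert (Ec3 : Rabs c3 <= Rabs C + 1).
  { pose proof (Rabs_triang_inv c3 C). lra. }
  assert (X1 : Rabs ((a1 - A) * e4) <= eta * (Rabs E + 1)).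
  { rewrite Rabs_mult. apply Rmult_le_compat; auto; apply Rabs_pos. }
  assert (X2 : Rabs (A * (e4 - E)) <= A * eta).
  { rewrite Rabs_mult, Rabs_pos_eq by auto. apply Rmult_le_compat_l; auto. }
  assert (X3 : Rabs (c3 * (b2 - B)) <= (Rabs C + 1) * eta).
  { rewrite Rabs_mult. apply Rmult_le_compat; auto; apply Rabs_pos. }
  assert (X4 : Rabs ((c3 - C) * B) <= eta * Rabs B).
  { rewrite Rabs_mult. apply Rmult_le_compat_r; auto; apply Rabs_pos. }
  apply abs_le0 in X1. apply abs_le0 in X2.
  apply abs_le0 in X3. apply abs_le0 in X4.
  replace (a1 * e4 - c3 * b2) with
    ((A * E - C * B) + ((a1 - A) * e4) + (A * (e4 - E)) - (c3 * (b2 - B)) - ((c3 - C) * B)) by ring.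
  lra.
Qed.

Definition cont_base_set a s0 t0 (Ds : list (R * R -> R -> R -> R)) : Prop :=
  forall eps, 0 < eps -> exists del, 0 < del /\
    forall x s t, cube a s0 t0 del x s t ->
      forall D, List.In D Ds -> Rabs (D x s t - D a s0 t0) < eps.

Lemma cont_base_set_intro a s0 t0 Ds :
  (forall D, List.In D Ds -> cont_base a s0 t0 D) -> cont_base_set a s0 t0 Ds.
Proof.
  induction Ds as [|D0 Ds IH]; intros H eps Heps.
  - exists 1. split. lra. intros x s t _ D [].
  - destruct (H D0 (or_introl eq_refl) eps Heps) as [d1 [Hd1 H1]].
    destruct (IH (fun D HD => H D (or_intror HD)) eps Heps) as [d2 [Hd2 H2]].
    exists (Rmin d1 d2). split. unfold Rmin; destruct Rle_dec; lra.
    intros x s t Hc D [E|HD].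
    + subst. apply H1. eapply cube_mono; [|exact Hc]. apply Rmin_l.
    + apply H2; auto. eapply cube_mono; [|exact Hc]. apply Rmin_r.
Qed.

Lemma ift_cont F Fx1 Fx2 Fs Ft G Gx1 Gx2 Gs Gt a s0 t0 :
  derivs F Fx1 Fx2 Fs Ft -> derivs G Gx1 Gx2 Gs Gt ->
  (forall D, List.In D [Fx1; Fx2; Fs; Ft; Gx1; Gx2; Gs; Gt]%list -> cont_base a s0 t0 D) ->
  0 < Fs a s0 t0 -> 0 < Fs a s0 t0 * Gt a s0 t0 - Gs a s0 t0 * Ft a s0 t0 ->
  F a s0 t0 = 0 -> G a s0 t0 = 0 ->
  exists r ds dt (S Q : R * R -> R) L, 0 < r /\ 0 < ds /\ 0 < dt /\ 0 <= L /\
    (forall x, box1 a r x -> Rabs (S x - s0) <= ds /\ Rabs (Q x - t0) <= dt /\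
        F x (S x) (Q x) = 0 /\ G x (S x) (Q x) = 0) /\
    (forall x x', box1 a r x -> box1 a r x' ->
       Rabs (S x - S x') <= L * (Rabs (fst x - fst x') + Rabs (snd x - snd x')) /\
       Rabs (Q x - Q x') <= L * (Rabs (fst x - fst x') + Rabs (snd x - snd x'))).
Proof.
  intros HDF HDG Hc HA Hdet HF0 HG0.
  apply cont_base_set_intro in Hc.
  set (A := Fs a s0 t0) in *. set (B := Ft a s0 t0) in *.
  set (C := Gs a s0 t0) in *. set (E := Gt a s0 t0) in *.
  set (det := A * E - C * B) in *.
  set (K := 2 + A + Rabs B + Rabs C + Rabs E).
  assert (HK : 0 < K) by (unfold K; pose proof (Rabs_pos B); pose proof (Rabs_pos C); pose proof (Rabs_pos E); lra).
  assert (Hq : 0 < det / (2 * K)) by (apply Rdiv_lt_0_compat; lra).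
  set (eta := Rmin 1 (Rmin (A / 2) (det / (2 * K)))).
  assert (He1 : eta <= 1) by apply Rmin_l.
  assert (He2 : eta <= A / 2) by (eapply Rle_trans; [apply Rmin_r| apply Rmin_l]).
  assert (He3 : eta <= det / (2 * K)) by (eapply Rle_trans; [apply Rmin_r| apply Rmin_r]).
  assert (He : 0 < eta) by (unfold eta, Rmin; repeat destruct Rle_dec; lra).
  destruct (Hc eta He) as [rho [Hrho Hcl]].
  set (M := 1 + Rabs (Fx1 a s0 t0) + Rabs (Fx2 a s0 t0) + Rabs A + Rabs B
              + Rabs (Gx1 a s0 t0) + Rabs (Gx2 a s0 t0) + Rabs C + Rabs E).
  assert (Hbd : forall D, List.In D [Fx1; Fx2; Fs; Ft; Gx1; Gx2; Gs; Gt]%list ->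
             Rabs (D a s0 t0) <= M - 1).
  { intros D HD. unfold M.
    pose proof (Rabs_pos (Fx1 a s0 t0)). pose proof (Rabs_pos (Fx2 a s0 t0)).
    pose proof (Rabs_pos A). pose proof (Rabs_pos B). pose proof (Rabs_pos C). pose proof (Rabs_pos E).
    pose proof (Rabs_pos (Gx1 a s0 t0)). pose proof (Rabs_pos (Gx2 a s0 t0)).
    simpl in HD. repeat destruct HD as [HD|HD]; subst; fold A B C E; try lra. }
  assert (Hb : forall D, List.In D [Fx1; Fx2; Fs; Ft; Gx1; Gx2; Gs; Gt]%list ->
             forall x s t, cube a s0 t0 rho x s t -> Rabs (D x s t) <= M).
  { intros D HD x s t Hx. pose proof (Hcl x s t Hx D HD). pose proof (Hbd D HD).
    pose proof (Rabs_triang_inv (D x s t) (D a s0 t0)). lra. }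
  assert (HM : 0 < M) by (pose proof (Hbd Fs ltac:(simpl; tauto)); pose proof (Rabs_pos (Fs a s0 t0)); lra).
  apply (ift_core F Fx1 Fx2 Fs Ft G Gx1 Gx2 Gs Gt a s0 t0 rho M (A / 2) (det / 2)); auto; try lra.
  - intros x s t Hx. repeat split; (eapply Hb; [|exact Hx]; simpl; tauto).
  - intros x s t Hx. repeat split; (eapply Hb; [|exact Hx]; simpl; tauto).
  - intros x s t Hx. pose proof (Hcl x s t Hx Fs ltac:(simpl; tauto)). fold A in H.
    apply Rlt_le, abs_le0 in H. lra.
  - intros x s1 t1 s2 t2 s3 t3 s4 t4 C1 C2 C3 C4.
    pose proof (Hcl x s1 t1 C1 Fs ltac:(simpl; tauto)) as X1.
    pose proof (Hcl x s2 t2 C2 Ft ltac:(simpl; tauto)) as X2.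
    pose proof (Hcl x s3 t3 C3 Gs ltac:(simpl; tauto)) as X3.
    pose proof (Hcl x s4 t4 C4 Gt ltac:(simpl; tauto)) as X4.
    fold A B C E in X1, X2, X3, X4.
    pose proof (bracket_est (Fs x s1 t1) A (Gt x s4 t4) E (Gs x s3 t3) C (Ft x s2 t2) B eta
                 ltac:(lra) ltac:(lra) ltac:(lra) ltac:(lra) ltac:(lra) ltac:(lra)) as Y.
    fold det K in Y.
    assert (eta * K <= det / 2).
    { replace (det / 2) with (det / (2 * K) * K) by (field; lra). apply Rmult_le_compat_r; lra. }
    lra.
Qed.

Lemma ballR (x y e : R) : Rabs (y - x) < e -> ball x e y.
Proof. intro H; exact H. Qed.

Lemma ballR_inv (x y e : R) : ball x e y -> Rabs (y - x) < e.
Proof. intro H; exact H. Qed.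

Lemma cont4 (h : (R * R) * (R * R) -> R) (a y0 : R * R) :
  continuous h (a, y0) -> forall eps, 0 < eps -> exists del, 0 < del /\
    forall x y : R * R, Rabs (fst x - fst a) <= del -> Rabs (snd x - snd a) <= del ->
      Rabs (fst y - fst y0) <= del -> Rabs (snd y - snd y0) <= del ->
      Rabs (h (x, y) - h (a, y0)) < eps.
Proof.
  intros Hc eps Heps.
  destruct (proj1 (filterlim_locally h (h (a, y0))) Hc (mkposreal eps Heps)) as [d Hd].
  exists (d / 2). split. apply Rdiv_lt_0_compat; [apply cond_pos|lra].
  intros x y H1 H2 H3 H4.
  pose proof (cond_pos d).
  apply (Hd (x, y)).
  destruct x, y, a, y0. simpl in *.
  split; split; apply ballR; simpl; lra.
Qed.

Lemma small2 L d1 d2 eps : 0 <= L -> 0 < eps -> 0 <= d1 -> 0 <= d2 ->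
  d1 < eps / (2 * L + 1) -> d2 < eps / (2 * L + 1) -> L * (d1 + d2) < eps.
Proof.
  intros HL He H1 H2 H3 H4.
  assert (E : 2 * L * (eps / (2 * L + 1)) + eps / (2 * L + 1) = eps) by (field; lra).
  assert (0 < eps / (2 * L + 1)) by (apply Rdiv_lt_0_compat; lra).
  nra.
Qed.

Lemma cont2_of_lip (l s : R * R) h H L : lip2 H L -> (forall z, in_box2 l s z -> h z = H z) ->
  cont_on_box2 l s h.
Proof.
  intros [HL Hl] Hh z Hz. apply filterlim_locally. intro eps.
  assert (Hd : 0 < eps / (2 * L + 1)) by (apply Rdiv_lt_0_compat; [apply cond_pos|lra]).
  exists (mkposreal _ Hd). intros y Hy Hyb.
  destruct Hy as [Hy1 Hy2]. apply ballR_inv in Hy1. apply ballR_inv in Hy2. simpl in Hy1, Hy2.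
  apply ballR. rewrite !Hh by auto.
  eapply Rle_lt_trans. apply Hl.
  apply small2; auto. apply cond_pos. apply Rabs_pos. apply Rabs_pos.
Qed.

Lemma cont3_of_lip (l s : R * R) l3 s3 h H L : lip2 H L -> (forall z, in_box2 l s z -> h z = H z) ->
  cont_on_box3 l s l3 s3 (fun z _ => h z).
Proof.
  intros [HL Hl] Hh z z3 Hz Hz3. apply filterlim_locally. intro eps.
  assert (Hd : 0 < eps / (2 * L + 1)) by (apply Rdiv_lt_0_compat; [apply cond_pos|lra]).
  exists (mkposreal _ Hd). intros y Hy [Hyb _].
  destruct y as [y y3]. destruct Hy as [[Hy1 Hy2] _].
  apply ballR_inv in Hy1. apply ballR_inv in Hy2. simpl in Hy1, Hy2, Hyb.
  apply ballR. simpl. rewrite !Hh by auto.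
  eapply Rle_lt_trans. apply Hl.
  apply small2; auto. apply cond_pos. apply Rabs_pos. apply Rabs_pos.
Qed.

Definition Fj (j : bool) (g : R * R -> R * R -> R) : R * R -> R -> R -> R :=
  fun x s t => g x (mky j s t).
Definition Dx1j (j : bool) (g : R * R -> R * R -> R) : R * R -> R -> R -> R := fun x s t => dx1 g x (mky j s t).
Definition Dx2j (j : bool) (g : R * R -> R * R -> R) : R * R -> R -> R -> R := fun x s t => dx2 g x (mky j s t).
Definition Dsj (j : bool) (g : R * R -> R * R -> R) : R * R -> R -> R -> R :=
  fun x s t => if j then dy1 g x (mky j s t) else dy2 g x (mky j s t).
Definition Dtj (j : bool) (g : R * R -> R * R -> R) : R * R -> R -> R -> R :=
  fun x s t => if j then dy2 g x (mky j s t) else dy1 g x (mky j s t).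

Lemma derivs_j j g : C1_comp g -> derivs (Fj j g) (Dx1j j g) (Dx2j j g) (Dsj j g) (Dtj j g).
Proof.
  intros [Hd _] x s t. destruct (Hd x (mky j s t)) as [A [B [C D]]].
  split; [exact (Derive_correct _ _ A)|]. split; [exact (Derive_correct _ _ B)|].
  destruct j; simpl in *; split.
  - exact (Derive_correct _ _ C).
  - exact (Derive_correct _ _ D).
  - exact (Derive_correct _ _ D).
  - exact (Derive_correct _ _ C).
Qed.

Lemma cont_base_of (h : (R * R) * (R * R) -> R) a j s0 t0 :
  continuous h (a, mky j s0 t0) -> cont_base a s0 t0 (fun x s t => h (x, mky j s t)).
Proof.
  intros Hc eps Heps. destruct (cont4 h a (mky j s0 t0) Hc eps Heps) as [d [Hd H]].
  exists d. split; auto. intros x s t [A [B [C D]]].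
  apply H; auto; destruct j; simpl; auto.
Qed.

Lemma conts_j j g a s0 t0 : C1_comp g ->
  cont_base a s0 t0 (Dx1j j g) /\ cont_base a s0 t0 (Dx2j j g) /\
  cont_base a s0 t0 (Dsj j g) /\ cont_base a s0 t0 (Dtj j g).
Proof.
  intros [_ Hc]. destruct (Hc (a, mky j s0 t0)) as [A [B [C D]]].
  split; [exact (cont_base_of _ a j s0 t0 A)|].
  split; [exact (cont_base_of _ a j s0 t0 B)|].
  destruct j; split.
  - exact (cont_base_of _ a true s0 t0 C).
  - exact (cont_base_of _ a true s0 t0 D).
  - exact (cont_base_of _ a false s0 t0 D).
  - exact (cont_base_of _ a false s0 t0 C).
Qed.

Definition negF (F : R * R -> R -> R -> R) : R * R -> R -> R -> R := fun x s t => - F x s t.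

Lemma derivs_opp F Fx1 Fx2 Fs Ft : derivs F Fx1 Fx2 Fs Ft ->
  derivs (negF F) (negF Fx1) (negF Fx2) (negF Fs) (negF Ft).
Proof.
  intros H x s t. destruct (H x s t) as [A [B [C D]]]. unfold negF.
  split; [exact (is_derive_opp _ _ _ A)|]. split; [exact (is_derive_opp _ _ _ B)|].
  split; [exact (is_derive_opp _ _ _ C)| exact (is_derive_opp _ _ _ D)].
Qed.

Lemma cont_base_opp a s0 t0 D : cont_base a s0 t0 D -> cont_base a s0 t0 (negF D).
Proof.
  intros H eps Heps. destruct (H eps Heps) as [d [Hd Hc]]. exists d; split; auto.
  intros x s t Hx. unfold negF. replace (- D x s t - - D a s0 t0) with (- (D x s t - D a s0 t0)) by ring.
  rewrite Rabs_Ropp. auto.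
Qed.

Definition ift_concl (F G : R * R -> R -> R -> R) a s0 t0 : Prop :=
  exists r ds dt (S Q : R * R -> R) L, 0 < r /\ 0 < ds /\ 0 < dt /\ 0 <= L /\
    (forall x, box1 a r x -> Rabs (S x - s0) <= ds /\ Rabs (Q x - t0) <= dt /\
        F x (S x) (Q x) = 0 /\ G x (S x) (Q x) = 0) /\
    (forall x x', box1 a r x -> box1 a r x' ->
       Rabs (S x - S x') <= L * (Rabs (fst x - fst x') + Rabs (snd x - snd x')) /\
       Rabs (Q x - Q x') <= L * (Rabs (fst x - fst x') + Rabs (snd x - snd x'))).

Lemma ift_concl_negF F G a s0 t0 : ift_concl (negF F) G a s0 t0 -> ift_concl F G a s0 t0.
Proof.
  intros [r [ds [dt [S [Q [L [A [B [C [D [E H]]]]]]]]]]].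
  exists r, ds, dt, S, Q, L. repeat split; auto; try apply E; auto; try apply H; auto.
  destruct (E x H0) as [_ [_ [X _]]]. unfold negF in X. lra.
Qed.

Lemma ift_concl_negG F G a s0 t0 : ift_concl F (negF G) a s0 t0 -> ift_concl F G a s0 t0.
Proof.
  intros [r [ds [dt [S [Q [L [A [B [C [D [E H]]]]]]]]]]].
  exists r, ds, dt, S, Q, L. repeat split; auto; try apply E; auto; try apply H; auto.
  destruct (E x H0) as [_ [_ [_ X]]]. unfold negF in X. lra.
Qed.

Lemma ift_signed F Fx1 Fx2 Fs Ft G Gx1 Gx2 Gs Gt a s0 t0 :
  derivs F Fx1 Fx2 Fs Ft -> derivs G Gx1 Gx2 Gs Gt ->
  (forall D, List.In D [Fx1; Fx2; Fs; Ft; Gx1; Gx2; Gs; Gt] -> cont_base a s0 t0 D) ->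
  Fs a s0 t0 <> 0 -> Fs a s0 t0 * Gt a s0 t0 - Gs a s0 t0 * Ft a s0 t0 <> 0 ->
  F a s0 t0 = 0 -> G a s0 t0 = 0 -> ift_concl F G a s0 t0.
Proof.
  intros HDF HDG Hc HA Hdet HF0 HG0.
  assert (posF : forall F Fx1 Fx2 Fs Ft G Gx1 Gx2 Gs Gt,
    derivs F Fx1 Fx2 Fs Ft -> derivs G Gx1 Gx2 Gs Gt ->
    (forall D, List.In D [Fx1; Fx2; Fs; Ft; Gx1; Gx2; Gs; Gt] -> cont_base a s0 t0 D) ->
    0 < Fs a s0 t0 -> Fs a s0 t0 * Gt a s0 t0 - Gs a s0 t0 * Ft a s0 t0 <> 0 ->
    F a s0 t0 = 0 -> G a s0 t0 = 0 -> ift_concl F G a s0 t0).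
  { clear. intros F Fx1 Fx2 Fs Ft G Gx1 Gx2 Gs Gt HDF HDG Hc HA Hdet HF0 HG0.
    destruct (Rlt_dec 0 (Fs a s0 t0 * Gt a s0 t0 - Gs a s0 t0 * Ft a s0 t0)).
    - exact (ift_cont F Fx1 Fx2 Fs Ft G Gx1 Gx2 Gs Gt a s0 t0 HDF HDG Hc HA r HF0 HG0).
    - apply ift_concl_negG.
      apply (ift_cont F Fx1 Fx2 Fs Ft (negF G) (negF Gx1) (negF Gx2) (negF Gs) (negF Gt) a s0 t0);
        auto.
      + apply derivs_opp; auto.
      + intros D HD. simpl in HD.
        repeat destruct HD as [HD|HD]; subst; try (apply cont_base_opp); apply Hc; simpl; tauto.
      + unfold negF. lra.
      + unfold negF. rewrite HG0. ring. }
  destruct (Rlt_dec 0 (Fs a s0 t0)).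
  - apply (posF F Fx1 Fx2 Fs Ft G Gx1 Gx2 Gs Gt); auto.
  - apply ift_concl_negF.
    apply (posF (negF F) (negF Fx1) (negF Fx2) (negF Fs) (negF Ft) G Gx1 Gx2 Gs Gt); auto.
    + apply derivs_opp; auto.
    + intros D HD. simpl in HD.
      repeat destruct HD as [HD|HD]; subst; try (apply cont_base_opp); apply Hc; simpl; tauto.
    + unfold negF. lra.
    + unfold negF. intro E. apply Hdet. lra.
    + unfold negF. rewrite HF0. ring.
Qed.

Lemma inbox_box1 (a : R * R) r x :
  in_box2 (fst a - r, snd a - r) (2 * r, 2 * r) x <-> box1 a r x.
Proof.
  unfold in_box2, in_cint, box1; simpl. split.
  - intros [A B]. split; apply Rabs_le; lra.
  - intros [A B]. apply abs_le0 in A. apply abs_le0 in B. split; lra.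
Qed.

Definition cbox (a : R * R) r (z : R * R) : R * R :=
  (clamp (fst a - r) (fst a + r) (fst z), clamp (snd a - r) (snd a + r) (snd z)).

Lemma cbox_in a r z : 0 < r -> box1 a r (cbox a r z).
Proof.
  intro Hr. unfold cbox, box1; simpl.
  pose proof (clamp_in (fst a - r) (fst a + r) (fst z) ltac:(lra)).
  pose proof (clamp_in (snd a - r) (snd a + r) (snd z) ltac:(lra)).
  split; apply Rabs_le; lra.
Qed.

Lemma cbox_id a r z : box1 a r z -> cbox a r z = z.
Proof.
  intros [A B]. apply abs_le0 in A. apply abs_le0 in B. unfold cbox.
  rewrite !clamp_id by lra. destruct z; reflexivity.
Qed.

Lemma lip_ext a r (S : R * R -> R) L : 0 < r -> 0 <= L ->
  (forall x x', box1 a r x -> box1 a r x' ->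
     Rabs (S x - S x') <= L * (Rabs (fst x - fst x') + Rabs (snd x - snd x'))) ->
  lip2 (fun z => S (cbox a r z)) L.
Proof.
  intros Hr HL H. split; auto. intros z z'.
  eapply Rle_trans. apply H; apply cbox_in; auto.
  apply Rmult_le_compat_l; auto. unfold cbox; simpl.
  apply Rplus_le_compat; apply clamp_lip; lra.
Qed.

Lemma final_step (f : R * R -> R * R -> R * R) (a b : R * R) (j : bool) s0 t0 r ds dt
  (S Q : R * R -> R) L :
  mky j s0 t0 = b -> 0 < r -> 0 < ds -> 0 < dt -> 0 <= L ->
  (forall x, box1 a r x -> Rabs (S x - s0) <= ds /\ Rabs (Q x - t0) <= dt /\
        Fj j (f1 f) x (S x) (Q x) = 0 /\ Fj j (f2 f) x (S x) (Q x) = 0) ->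
  (forall x x', box1 a r x -> box1 a r x' ->
       Rabs (S x - S x') <= L * (Rabs (fst x - fst x') + Rabs (snd x - snd x')) /\
       Rabs (Q x - Q x') <= L * (Rabs (fst x - fst x') + Rabs (snd x - snd x'))) ->
  exists (rl rs : R*R) (v1l v1s v2l v2s : R) (j : bool)
         (p : R*R -> R -> R) (q : R*R -> R),
    let Vjl := if j then v1l else v2l in
    let Vjs := if j then v1s else v2s in
    let Vj'l := if j then v2l else v1l in
    let Vj's := if j then v2s else v1s in
    0 < fst rs /\ 0 < snd rs /\ 0 < v1s /\ 0 < v2s /\
    in_box2 rl rs a /\ in_cint v1l v1s (fst b) /\ in_cint v2l v2s (snd b) /\
    (forall x t, in_box2 rl rs x -> in_cint Vj'l Vj's t -> in_cint Vjl Vjs (p x t)) /\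
    (forall x, in_box2 rl rs x -> in_cint Vj'l Vj's (q x)) /\
    (forall x, in_box2 rl rs x -> f x (mky j (p x (q x)) (q x)) = (0, 0)) /\
    cont_on_box3 rl rs Vj'l Vj's p /\ cont_on_box2 rl rs q /\
    Pn_limit3 rl rs Vj'l Vj's a (if j then snd b else fst b) p /\
    Pn_limit2 rl rs a q.
Proof.
  intros Hb Hr Hds Hdt HL HS HSl.
  set (rl := (fst a - r, snd a - r)). set (rs := (2 * r, 2 * r)).
  assert (Hbox : forall x, in_box2 rl rs x <-> box1 a r x) by (intro; apply inbox_box1).
  assert (LS : lip2 (fun z => S (cbox a r z)) L) by (apply lip_ext; auto; intros; apply HSl; auto).
  assert (LQ : lip2 (fun z => Q (cbox a r z)) L) by (apply lip_ext; auto; intros; apply HSl; auto).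
  assert (ES : forall z, in_box2 rl rs z -> S z = S (cbox a r z)).
  { intros z Hz. rewrite cbox_id; auto. apply Hbox; auto. }
  assert (EQ : forall z, in_box2 rl rs z -> Q z = Q (cbox a r z)).
  { intros z Hz. rewrite cbox_id; auto. apply Hbox; auto. }
  assert (Hrs1 : 0 < fst rs) by (simpl; lra). assert (Hrs2 : 0 < snd rs) by (simpl; lra).
  exists rl, rs,
    (if j then s0 - ds else t0 - dt), (if j then 2 * ds else 2 * dt),
    (if j then t0 - dt else s0 - ds), (if j then 2 * dt else 2 * ds),
    j, (fun x _ => S x), Q.
  assert (E1 : (if j then (if j then s0 - ds else t0 - dt) else (if j then t0 - dt else s0 - ds)) = s0 - ds)
    by (destruct j; reflexivity).
  assert (E2 : (if j then (if j then 2 * ds else 2 * dt) else (if j then 2 * dt else 2 * ds)) = 2 * ds)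
    by (destruct j; reflexivity).
  assert (E3 : (if j then (if j then t0 - dt else s0 - ds) else (if j then s0 - ds else t0 - dt)) = t0 - dt)
    by (destruct j; reflexivity).
  assert (E4 : (if j then (if j then 2 * dt else 2 * ds) else (if j then 2 * ds else 2 * dt)) = 2 * dt)
    by (destruct j; reflexivity).
  cbv zeta. rewrite E1, E2, E3, E4.
  assert (Hv : forall c d u, 0 < d -> Rabs (u - c) <= d -> in_cint (c - d) (2 * d) u).
  { intros c d u Hd Hu. apply abs_le0 in Hu. unfold in_cint; lra. }
  split. destruct j; lra.
  split. destruct j; lra.
  split. destruct j; lra.
  split. destruct j; lra.
  split. { apply Hbox. split; rewrite Rminus_diag, Rabs_R0; lra. }
  split. { rewrite <- Hb. destruct j; simpl; apply Hv; auto; rewrite Rminus_diag, Rabs_R0; lra. }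
  split. { rewrite <- Hb. destruct j; simpl; apply Hv; auto; rewrite Rminus_diag, Rabs_R0; lra. }
  split. { intros x t Hx _. apply Hv; auto. apply HS. apply Hbox; auto. }
  split. { intros x Hx. apply Hv; auto. apply HS. apply Hbox; auto. }
  split.
  { intros x Hx. destruct (HS x (proj1 (Hbox x) Hx)) as [_ [_ [F1 F2]]].
    unfold Fj, f1, f2 in F1, F2.
    destruct (f x (mky j (S x) (Q x))) as [u v]. simpl in F1, F2. subst; reflexivity. }
  split. { apply (cont3_of_lip rl rs (t0 - dt) (2 * dt) S (fun z => S (cbox a r z)) L); auto. }
  split. { apply (cont2_of_lip rl rs Q (fun z => Q (cbox a r z)) L); auto. }
  split.
  { apply (Pn_limit3_lip rl rs (t0 - dt) (2 * dt) a _ S (fun z => S (cbox a r z)) L); auto. lra. }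
  { apply (Pn_limit2_lip rl rs a Q (fun z => Q (cbox a r z)) L); auto. }
Qed.

Theorem theorem2 (f : R*R -> R*R -> R*R) (a b : R*R) :
  cont_diff f -> f a b = (0, 0) -> jac_y_det f a b <> 0 ->
  exists (rl rs : R*R) (v1l v1s v2l v2s : R) (j : bool)
         (p : R*R -> R -> R) (q : R*R -> R),
    let Vjl := if j then v1l else v2l in
    let Vjs := if j then v1s else v2s in
    let Vj'l := if j then v2l else v1l in
    let Vj's := if j then v2s else v1s in
    0 < fst rs /\ 0 < snd rs /\ 0 < v1s /\ 0 < v2s /\
    in_box2 rl rs a /\ in_cint v1l v1s (fst b) /\ in_cint v2l v2s (snd b) /\
    (forall x t, in_box2 rl rs x -> in_cint Vj'l Vj's t -> in_cint Vjl Vjs (p x t)) /\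
    (forall x, in_box2 rl rs x -> in_cint Vj'l Vj's (q x)) /\
    (forall x, in_box2 rl rs x -> f x (mky j (p x (q x)) (q x)) = (0, 0)) /\
    cont_on_box3 rl rs Vj'l Vj's p /\ cont_on_box2 rl rs q /\
    Pn_limit3 rl rs Vj'l Vj's a (if j then snd b else fst b) p /\
    Pn_limit2 rl rs a q.
Proof.
  intros [C1 C2] Hf Hdet.
  assert (main : forall j : bool, (if j then dy1 (f1 f) a b else dy2 (f1 f) a b) <> 0 ->
    exists (rl rs : R*R) (v1l v1s v2l v2s : R) (j : bool)
         (p : R*R -> R -> R) (q : R*R -> R),
    let Vjl := if j then v1l else v2l in
    let Vjs := if j then v1s else v2s in
    let Vj'l := if j then v2l else v1l in
    let Vj's := if j then v2s else v1s in
    0 < fst rs /\ 0 < snd rs /\ 0 < v1s /\ 0 < v2s /\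
    in_box2 rl rs a /\ in_cint v1l v1s (fst b) /\ in_cint v2l v2s (snd b) /\
    (forall x t, in_box2 rl rs x -> in_cint Vj'l Vj's t -> in_cint Vjl Vjs (p x t)) /\
    (forall x, in_box2 rl rs x -> in_cint Vj'l Vj's (q x)) /\
    (forall x, in_box2 rl rs x -> f x (mky j (p x (q x)) (q x)) = (0, 0)) /\
    cont_on_box3 rl rs Vj'l Vj's p /\ cont_on_box2 rl rs q /\
    Pn_limit3 rl rs Vj'l Vj's a (if j then snd b else fst b) p /\
    Pn_limit2 rl rs a q).
  { intros j Hj.
    set (s0 := if j then fst b else snd b). set (t0 := if j then snd b else fst b).
    assert (Hb : mky j s0 t0 = b) by (unfold s0, t0; destruct j, b; reflexivity).
    destruct (conts_j j (f1 f) a s0 t0 C1) as [K1 [K2 [K3 K4]]].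
    destruct (conts_j j (f2 f) a s0 t0 C2) as [K5 [K6 [K7 K8]]].
    destruct (ift_signed (Fj j (f1 f)) (Dx1j j (f1 f)) (Dx2j j (f1 f)) (Dsj j (f1 f)) (Dtj j (f1 f))
               (Fj j (f2 f)) (Dx1j j (f2 f)) (Dx2j j (f2 f)) (Dsj j (f2 f)) (Dtj j (f2 f)) a s0 t0)
      as [r [ds [dt [S [Q [L [A [B [C [D [E H]]]]]]]]]]].
    - apply derivs_j; auto.
    - apply derivs_j; auto.
    - intros Dd HD. simpl in HD. repeat destruct HD as [HD|HD]; try (subst Dd; assumption). destruct HD.
    - unfold Dsj. rewrite Hb. exact Hj.
    - unfold Dsj, Dtj, jac_y_det in *. rewrite Hb. destruct j.
      + intro E. apply Hdet. lra.
      + intro E. apply Hdet. lra.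
    - unfold Fj, f1. rewrite Hb, Hf. reflexivity.
    - unfold Fj, f2. rewrite Hb, Hf. reflexivity.
    - exact (final_step f a b j s0 t0 r ds dt S Q L Hb A B C D E H). }
  destruct (Req_dec (dy1 (f1 f) a b) 0) as [E|E].
  - apply (main false). simpl. intro E2. apply Hdet. unfold jac_y_det. rewrite E, E2. ring.
  - apply (main true). exact E.
Qed.
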